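(* For $t\in(0,1)$ and $n\ge1$ the recurrence coefficients satisfy $$(2n+2+\alpha+\beta)\alpha_n=2tr_n-2y_n-\beta+(2n+1+\alpha+\beta)t+(1-t)x_n=2\mathsf p_1(n,t)-\beta+(2n+1+\alpha+\beta)t+(1-t)x_n,$$ and $$\begin{aligned}(2n-1+\alpha+\beta)(2n+1+\alpha+\beta)\beta_n&=(y_n-tr_n)^2+(2n+\alpha)tr_n+[\beta-(2n+\alpha+\beta)t]y_n+n(n+\alpha)t\\&=\mathsf p_1(n,t)^2+(2n+\alpha)\mathsf p_1(n,t)+(2n+\alpha+\beta)(1-t)y_n+n(n+\alpha)t\\&=\mathsf p_1(n,t)^2+[-\beta+(2n+\alpha+\beta)t]\mathsf p_1(n,t)+(2n+\alpha+\beta)t(1-t)\mathsf p_1'(n,t)+n(n+\alpha)t.\end{aligned}$$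
   Context: Fix $\alpha>0$, $\beta>0$, and real $A,B$ with $A\ge0$, $A+B\ge0$, not both zero; $\theta$ is the Heaviside step function. For $t\in(0,1)$ let $w(x;t)=x^\alpha(1-x)^\beta(A+B\theta(x-t))$ on $[0,1]$, and let $P_n(x)=P_n(x;t)=x^n+\mathsf p_1(n,t)x^{n-1}+\cdots$ be the monic orthogonal polynomials: $\int_0^1P_iP_jw\,dx=h_i(t)\delta_{ij}$, $h_i>0$, satisfying $xP_n=P_{n+1}+\alpha_nP_n+\beta_nP_{n-1}$, $P_{-1}=0$, $\beta_n=h_n/h_{n-1}$, $\mathsf p_1(0,t)=0$. Define $R_n(t)=B\,t^\alpha(1-t)^\beta P_n(t;t)^2/h_n$, $r_n(t)=B\,t^\alpha(1-t)^\beta P_n(t;t)P_{n-1}(t;t)/h_{n-1}$ ($r_0=0$), $x_n(t)=\frac{\beta}{h_n}\int_0^1\frac{P_n(y)^2}{1-y}\,y^\alpha(1-y)^\beta(A+B\theta(y-t))\,dy$, $y_n(t)=\frac{\beta}{h_{n-1}}\int_0^1\frac{P_n(y)P_{n-1}(y)}{1-y}\,y^\alpha(1-y)^\beta(A+B\theta(y-t))\,dy$ ($y_0=0$). A prime denotes $d/dt$. *)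

(* Defs.v *)
From Stdlib Require Import Reals Lra.
Open Scope R_scope.

(* Heaviside step function (value at 0 is irrelevant for all integrals). *)
Definition heav (x : R) : R := if Rlt_dec x 0 then 0 else 1.

(* Real power x^a for x >= 0, with 0^a = 0 (a > 0). *)
Definition powr (x a : R) : R := if Rle_dec x 0 then 0 else Rpower x a.

Definition weight (al be A B t x : R) : R :=
  powr x al * powr (1 - x) be * (A + B * heav (x - t)).

Definition polyP (c : nat -> nat -> R -> R) (n : nat) (t x : R) : R :=
  sum_f_R0 (fun k => c n k t * x ^ k) n.

(* (Possibly improper at 1) Riemann integral over [0,1]:
   int_0^1 f = lim_{b -> 1^-} int_0^b f. For bounded Riemann integrable f it
   coincides with the ordinary integral. *)
Definition int01 (f : R -> R) (l : R) : Prop :=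
  (forall b, 0 < b < 1 -> inhabited (Riemann_integrable f 0 b)) /\
  (forall eps, eps > 0 -> exists delta, delta > 0 /\
     forall b (pr : Riemann_integrable f 0 b),
       1 - delta < b < 1 -> Rabs (RiemannInt pr - l) < eps).

(* Main.v *)
Require Import Defs.
From Stdlib Require Import Reals Lra Lia Psatz FunctionalExtensionality.
Open Scope R_scope.

Lemma int01_unique f a b : int01 f a -> int01 f b -> a = b.
Proof.
  intros [Hi1 Hc1] [_ Hc2].
  destruct (Req_dec a b) as [|Hne]; [assumption|exfalso].
  set (e := Rabs (a - b) / 2).
  assert (He : e > 0) by (unfold e; apply Rdiv_lt_0_compat; [apply Rabs_pos_lt; lra| lra]).
  destruct (Hc1 e He) as [d1 [Hd1 H1]].
  destruct (Hc2 e He) as [d2 [Hd2 H2]].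
  set (bb := 1 - Rmin (Rmin d1 d2) 1 / 2).
  assert (Hm1 : Rmin (Rmin d1 d2) 1 <= d1) by
    (eapply Rle_trans; [apply Rmin_l| apply Rmin_l]).
  assert (Hm2 : Rmin (Rmin d1 d2) 1 <= d2) by
    (eapply Rle_trans; [apply Rmin_l| apply Rmin_r]).
  assert (Hm3 : Rmin (Rmin d1 d2) 1 <= 1) by apply Rmin_r.
  assert (Hm0 : 0 < Rmin (Rmin d1 d2) 1) by
    (apply Rmin_glb_lt; [apply Rmin_glb_lt; lra| lra]).
  assert (Hb : 0 < bb < 1) by (unfold bb; lra).
  destruct (Hi1 bb Hb) as [pr].
  assert (X1 := H1 bb pr ltac:(unfold bb; lra)).
  assert (X2 := H2 bb pr ltac:(unfold bb; lra)).
  assert (Rabs (a - b) <= Rabs (RiemannInt pr - b) + Rabs (RiemannInt pr - a)).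
  { replace (a - b) with ((RiemannInt pr - b) - (RiemannInt pr - a)) by ring.
    eapply Rle_trans; [apply Rabs_triang|]. rewrite Rabs_Ropp. lra. }
  unfold e in *. lra.
Qed.

Lemma int01_lin f g a b l : int01 f a -> int01 g b ->
  int01 (fun x => f x + l * g x) (a + l * b).
Proof.
  intros [Hi1 Hc1] [Hi2 Hc2]. split.
  - intros bb Hb. destruct (Hi1 bb Hb) as [p1]; destruct (Hi2 bb Hb) as [p2].
    constructor. apply RiemannInt_P10; assumption.
  - intros eps Heps.
    set (e := eps / (2 * (1 + Rabs l))).
    assert (Hl : 0 < 1 + Rabs l) by (generalize (Rabs_pos l); lra).
    assert (He : e > 0) by (unfold e; apply Rdiv_lt_0_compat; lra).
    destruct (Hc1 e He) as [d1 [Hd1 H1]].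
    destruct (Hc2 e He) as [d2 [Hd2 H2]].
    exists (Rmin (Rmin d1 d2) 1). split; [apply Rmin_glb_lt; [apply Rmin_glb_lt|]; lra|].
    intros bb pr Hb.
    assert (Hm1 : Rmin (Rmin d1 d2) 1 <= d1) by
      (eapply Rle_trans; [apply Rmin_l| apply Rmin_l]).
    assert (Hm2 : Rmin (Rmin d1 d2) 1 <= d2) by
      (eapply Rle_trans; [apply Rmin_l| apply Rmin_r]).
    assert (Hm3 : Rmin (Rmin d1 d2) 1 <= 1) by apply Rmin_r.
    assert (Hb1 : 0 < bb < 1) by lra.
    destruct (Hi1 bb Hb1) as [p1]; destruct (Hi2 bb Hb1) as [p2].
    rewrite (RiemannInt_P13 p1 p2 pr).
    assert (X1 := H1 bb p1 ltac:(lra)).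
    assert (X2 := H2 bb p2 ltac:(lra)).
    replace (RiemannInt p1 + l * RiemannInt p2 - (a + l * b)) with
      ((RiemannInt p1 - a) + l * (RiemannInt p2 - b)) by ring.
    eapply Rle_lt_trans; [apply Rabs_triang|]. rewrite Rabs_mult.
    assert (Rabs l * Rabs (RiemannInt p2 - b) <= Rabs l * e) by
      (apply Rmult_le_compat_l; [apply Rabs_pos| lra]).
    assert (e * (2 * (1 + Rabs l)) = eps) by (unfold e; field; lra).
    generalize (Rabs_pos l); nra.
Qed.

Lemma int01_ext f g a : (forall x, 0 <= x < 1 -> f x = g x) -> int01 f a -> int01 g a.
Proof.
  intros Heq [Hi Hc]. split.
  - intros bb Hb. destruct (Hi bb Hb) as [p]. constructor.
    apply Riemann_integrable_ext with f; [|exact p].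
    intros x Hx. apply Heq. rewrite Rmin_left in Hx by lra. rewrite Rmax_right in Hx by lra. lra.
  - intros eps Heps. destruct (Hc eps Heps) as [d [Hd H]].
    exists (Rmin d 1). split; [apply Rmin_glb_lt; lra|].
    intros bb pr Hb.
    assert (Rmin d 1 <= d) by apply Rmin_l. assert (Rmin d 1 <= 1) by apply Rmin_r.
    assert (Hb1 : 0 < bb < 1) by lra.
    destruct (Hi bb Hb1) as [p].
    rewrite <- (RiemannInt_P18 p pr); [apply H; lra| lra|].
    intros x Hx. apply Heq. lra.
Qed.

Lemma int01_scal f a l : int01 f a -> int01 (fun x => l * f x) (l * a).
Proof.
  intros H. assert (H0 : int01 (fun x => 0) 0).
  { split. - intros. constructor. apply Riemann_integrable_ext with (fct_cte 0).
      intros; reflexivity. apply RiemannInt_P14.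
    - intros eps Heps. exists 1. split; [lra|]. intros bb pr Hb.
      rewrite (RiemannInt_P18 pr (RiemannInt_P14 0 bb 0)) by (lra || reflexivity).
      rewrite RiemannInt_P15. rewrite Rminus_0_r, Rmult_0_l, Rabs_R0. lra. }
  assert (X := int01_lin _ _ _ _ l H0 H).
  eapply int01_ext; [|replace (l*a) with (0 + l*a) by ring; exact X].
  intros; simpl; ring.
Qed.

Lemma int01_zero : int01 (fun _ => 0) 0.
Proof.
  split. - intros. constructor. apply Riemann_integrable_ext with (fct_cte 0).
      intros; reflexivity. apply RiemannInt_P14.
    - intros eps Heps. exists 1. split; [lra|]. intros bb pr Hb.
      rewrite (RiemannInt_P18 pr (RiemannInt_P14 0 bb 0)) by (lra || reflexivity).
      rewrite RiemannInt_P15. rewrite Rminus_0_r, Rmult_0_l, Rabs_R0. lra.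
Qed.

Lemma int01_add f g a b : int01 f a -> int01 g b -> int01 (fun x => f x + g x) (a + b).
Proof.
  intros H1 H2. eapply int01_ext; [|rewrite <- (Rmult_1_l b); exact (int01_lin _ _ _ _ 1 H1 H2)].
  intros; simpl; ring.
Qed.

Lemma int01_sum (F : nat -> R -> R) (v : nat -> R) m :
  (forall k, (k <= m)%nat -> int01 (F k) (v k)) ->
  int01 (fun x => sum_f_R0 (fun k => F k x) m) (sum_f_R0 v m).
Proof.
  induction m; intros H.
  - simpl. apply H. lia.
  - simpl. apply int01_add; [apply IHm; intros; apply H; lia| apply H; lia].
Qed.

Definition ev (m : nat) (a : nat -> R) (x : R) : R := sum_f_R0 (fun k => a k * x ^ k) m.
Definition sh (a : nat -> R) (k : nat) : R := match k with O => 0 | S k' => a k' end.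
Definition evd (m : nat) (a : nat -> R) (x : R) : R :=
  sum_f_R0 (fun k => INR k * a k * x ^ (pred k)) m.
Definition xd (a : nat -> R) (k : nat) : R := INR k * a k.

Lemma ev_S m a x : ev (S m) a x = ev m a x + a (S m) * x ^ (S m).
Proof. reflexivity. Qed.

Lemma ev_ext m a b x : (forall k, (k <= m)%nat -> a k = b k) -> ev m a x = ev m b x.
Proof. intros H; unfold ev; apply sum_eq; intros; rewrite H; auto. Qed.

Lemma ev_lin m a b l x : ev m (fun k => a k + l * b k) x = ev m a x + l * ev m b x.
Proof.
  unfold ev. induction m; simpl; [ring|]. rewrite IHm. ring.
Qed.

Lemma ev_mulX m a x : ev (S m) (sh a) x = x * ev m a x.
Proof.
  unfold ev. induction m.
  - simpl. ring.
  - rewrite tech5, IHm. simpl. ring.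
Qed.

Lemma ev_trunc m d a x : (forall k, (m < k)%nat -> (k <= m + d)%nat -> a k = 0) ->
  ev (m + d) a x = ev m a x.
Proof.
  induction d; intros H.
  - now rewrite Nat.add_0_r.
  - rewrite Nat.add_succ_r, ev_S, H by lia. rewrite IHd by (intros; apply H; lia). ring.
Qed.

Lemma ev_trunc' m m' a x : (m <= m')%nat -> (forall k, (m < k)%nat -> (k <= m')%nat -> a k = 0) ->
  ev m' a x = ev m a x.
Proof.
  intros Hm H. replace m' with (m + (m' - m))%nat by lia. apply ev_trunc.
  intros; apply H; lia.
Qed.

Lemma ev_deriv m a x : derivable_pt_lim (ev m a) x (evd m a x).
Proof.
  induction m.
  - unfold ev, evd; simpl. replace (0 * a 0%nat * 1) with 0 by ring.
    apply derivable_pt_lim_const.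
  - assert (E : ev (S m) a = fun y => ev m a y + a (S m) * y ^ S m)
      by (apply functional_extensionality; reflexivity).
    rewrite E. unfold evd at 1; rewrite tech5. fold (evd m a x).
    apply (derivable_pt_lim_plus (ev m a) (fun y => a (S m) * y ^ S m)); [exact IHm|].
    replace (INR (S m) * a (S m) * x ^ pred (S m)) with (a (S m) * (INR (S m) * x ^ pred (S m))) by ring.
    apply (derivable_pt_lim_scal (fun y => y ^ S m)).
    apply derivable_pt_lim_pow.
Qed.

Lemma evd_xd m a x : x * evd m a x = ev m (xd a) x.
Proof.
  unfold evd, ev, xd. rewrite scal_sum. apply sum_eq. intros k _.
  destruct k; simpl; ring.
Qed.

Lemma sum_swap (F : nat -> nat -> R) m1 m2 :
  sum_f_R0 (fun k => sum_f_R0 (fun j => F j k) m2) m1 =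
  sum_f_R0 (fun j => sum_f_R0 (fun k => F j k) m1) m2.
Proof.
  induction m1.
  - simpl. reflexivity.
  - simpl. rewrite IHm1. rewrite <- sum_plus. apply sum_eq. intros; reflexivity.
Qed.

Lemma ev_cont m a x : continuity_pt (ev m a) x.
Proof.
  apply derivable_continuous_pt. exists (evd m a x). apply ev_deriv.
Qed.

Lemma evd_cont m a x : continuity_pt (evd m a) x.
Proof.
  unfold evd. induction m; simpl.
  - apply continuity_pt_const. intros u v; reflexivity.
  - apply (continuity_pt_plus (fun y => sum_f_R0 (fun k => INR k * a k * y ^ pred k) m)
             (fun y => INR (S m) * a (S m) * y ^ m)); [exact IHm|].
    apply (continuity_pt_scal (fun y => y ^ m)). apply derivable_continuous_pt.
    exists (INR m * x ^ pred m). apply derivable_pt_lim_pow.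
Qed.

Section Span.
Variable c : nat -> nat -> R -> R.
Variable s : R.
Hypothesis hmonic : forall n s, c n n s = 1.

Definition cc (i : nat) (k : nat) : R := if Nat.leb k i then c i k s else 0.

Lemma cc_top i : cc i i = 1.
Proof. unfold cc. rewrite Nat.leb_refl. apply hmonic. Qed.
Lemma cc_high i k : (i < k)%nat -> cc i k = 0.
Proof. intros H. unfold cc. destruct (Nat.leb_spec k i); [lia|reflexivity]. Qed.
Lemma cc_low i k : (k <= i)%nat -> cc i k = c i k s.
Proof. intros H. unfold cc. destruct (Nat.leb_spec k i); [reflexivity|lia]. Qed.

Lemma polyP_ev i x : polyP c i s x = ev i (cc i) x.
Proof. unfold polyP, ev. apply sum_eq. intros k Hk. rewrite cc_low; auto. Qed.

Lemma ev_cc_ext i m x : (i <= m)%nat -> ev m (cc i) x = polyP c i s x.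
Proof.
  intros H. rewrite polyP_ev. apply ev_trunc'; auto. intros; apply cc_high; lia.
Qed.

Lemma span m (a : nat -> R) : exists b : nat -> R,
  forall k, (k <= m)%nat -> a k = sum_f_R0 (fun j => b j * cc j k) m.
Proof.
  revert a. induction m; intros a.
  - exists (fun _ => a 0%nat). intros k Hk. assert (k = 0%nat) by lia. subst.
    simpl. rewrite cc_top. ring.
  - destruct (IHm (fun k => a k - a (S m) * cc (S m) k)) as [b Hb].
    exists (fun j => if Nat.eqb j (S m) then a (S m) else b j).
    intros k Hk. rewrite tech5. rewrite Nat.eqb_refl.
    rewrite (sum_eq _ (fun j => b j * cc j k)).
    2:{ intros j Hj. destruct (Nat.eqb_spec j (S m)); [lia|reflexivity]. }
    destruct (Nat.eq_dec k (S m)).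
    + subst. rewrite sum_eq_R0. rewrite cc_top; ring.
      intros j Hj. rewrite cc_high by lia. ring.
    + rewrite <- Hb by lia. ring.
Qed.

Lemma span_fun m a b : (forall k, (k <= m)%nat -> a k = sum_f_R0 (fun j => b j * cc j k) m) ->
  forall x, ev m a x = sum_f_R0 (fun j => b j * polyP c j s x) m.
Proof.
  intros Hb x. unfold ev.
  rewrite (sum_eq _ (fun k => sum_f_R0 (fun j => b j * cc j k * x ^ k) m)).
  2:{ intros k Hk. rewrite Hb by auto. rewrite Rmult_comm, scal_sum. apply sum_eq. intros; ring. }
  rewrite sum_swap. apply sum_eq. intros j Hj.
  rewrite <- ev_cc_ext with (m := m) by auto. unfold ev. rewrite scal_sum.
  apply sum_eq. intros; ring.
Qed.

End Span.

Lemma ev_comb4 m a1 a2 a3 a4 l1 l2 l3 l4 x :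
  ev m (fun k => l1 * a1 k + l2 * a2 k + l3 * a3 k + l4 * a4 k) x =
  l1 * ev m a1 x + l2 * ev m a2 x + l3 * ev m a3 x + l4 * ev m a4 x.
Proof. unfold ev. induction m; simpl; [ring|]. rewrite IHm. ring. Qed.

Lemma ev_hi0 m a x : a (S m) = 0 -> ev (S m) a x = ev m a x.
Proof. intros H. rewrite ev_S, H. ring. Qed.

Lemma sum_kron (b : nat -> R) (v : R) m i :
  sum_f_R0 (fun j => b j * (if Nat.eqb j i then v else 0)) m =
  if Nat.leb i m then b i * v else 0.
Proof.
  induction m.
  - simpl. destruct i; simpl; ring.
  - rewrite tech5, IHm. destruct (Nat.eqb_spec (S m) i).
    + subst. rewrite Nat.leb_refl. replace (Nat.leb (S m) m) with false.
      ring. symmetry; apply Nat.leb_gt; lia.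
    + destruct (Nat.leb_spec i m); destruct (Nat.leb_spec i (S m)); try lia; ring.
Qed.

Section LS.
Variables al be A B : R.
Variable c : nat -> nat -> R -> R.
Variable h : nat -> R -> R.
Hypothesis hmonic : forall n s, c n n s = 1.
Variable s : R.
Hypothesis horth : forall i j : nat, i <> j ->
      int01 (fun x => polyP c i s x * polyP c j s x * weight al be A B s x) 0.
Hypothesis hh : forall i : nat,
      int01 (fun x => polyP c i s x ^ 2 * weight al be A B s x) (h i s).

Definition Lr (f : R -> R) (v : R) := int01 (fun x => f x * weight al be A B s x) v.

Lemma Lr_ext f g v : (forall x, 0 <= x < 1 -> f x = g x) -> Lr f v -> Lr g v.
Proof. intros H; apply int01_ext. intros x Hx; rewrite H; auto. Qed.

Lemma Lr_lin f g a b l : Lr f a -> Lr g b -> Lr (fun x => f x + l * g x) (a + l * b).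
Proof.
  intros H1 H2. unfold Lr. eapply int01_ext; [|exact (int01_lin _ _ _ _ l H1 H2)].
  intros; simpl; ring.
Qed.

Lemma Lr_scal f a l : Lr f a -> Lr (fun x => l * f x) (l * a).
Proof.
  intros H1. unfold Lr. eapply int01_ext; [|exact (int01_scal _ _ l H1)].
  intros; simpl; ring.
Qed.

Lemma Lr_add f g a b : Lr f a -> Lr g b -> Lr (fun x => f x + g x) (a + b).
Proof.
  intros H1 H2. eapply Lr_ext; [|rewrite <- (Rmult_1_l b); exact (Lr_lin _ _ _ _ 1 H1 H2)].
  intros; simpl; ring.
Qed.

Lemma Lr_sub f g a b : Lr f a -> Lr g b -> Lr (fun x => f x - g x) (a - b).
Proof.
  intros H1 H2. eapply Lr_ext; [|replace (a - b) with (a + (-1) * b) by ring; exact (Lr_lin _ _ _ _ (-1) H1 H2)].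
  intros; simpl; ring.
Qed.

Lemma Lr_sum (F : nat -> R -> R) (v : nat -> R) m :
  (forall k, (k <= m)%nat -> Lr (F k) (v k)) ->
  Lr (fun x => sum_f_R0 (fun k => F k x) m) (sum_f_R0 v m).
Proof.
  intros H. unfold Lr. eapply int01_ext; [|apply int01_sum; exact H].
  intros x _. simpl. rewrite Rmult_comm, scal_sum. apply sum_eq. intros; ring.
Qed.

Lemma Lr_PP j i : Lr (fun x => polyP c j s x * polyP c i s x) (if Nat.eqb j i then h i s else 0).
Proof.
  destruct (Nat.eqb_spec j i).
  - subst. unfold Lr. eapply int01_ext; [|apply hh]. intros; simpl; ring.
  - apply horth; auto.
Qed.

Lemma Lr_sumP m (b : nat -> R) i :
  Lr (fun x => sum_f_R0 (fun j => b j * polyP c j s x) m * polyP c i s x)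
     (if Nat.leb i m then b i * h i s else 0).
Proof.
  rewrite <- sum_kron.
  eapply Lr_ext; [|apply Lr_sum; intros k _; apply Lr_scal; apply Lr_PP].
  intros x _. simpl. rewrite Rmult_comm, scal_sum. apply sum_eq. intros; ring.
Qed.

Lemma sum_cc_low (b : nat -> R) k :
  sum_f_R0 (fun j => b j * cc c s j k) k = b k.
Proof.
  destruct k.
  - simpl. rewrite cc_top by auto. ring.
  - rewrite tech5, sum_eq_R0. rewrite cc_top by auto. ring.
    intros j Hj. rewrite cc_high by lia. ring.
Qed.

Lemma Lgen m a i : exists v, Lr (fun x => ev m a x * polyP c i s x) v.
Proof.
  destruct (span c s hmonic m a) as [b Hb].
  eexists. eapply Lr_ext; [|apply (Lr_sumP m b i)].
  intros x _. rewrite (span_fun c s m a b Hb x). reflexivity.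
Qed.

Lemma Lorth m a i : (m < i)%nat -> Lr (fun x => ev m a x * polyP c i s x) 0.
Proof.
  intros Hmi. destruct (span c s hmonic m a) as [b Hb].
  replace 0 with (if Nat.leb i m then b i * h i s else 0).
  2:{ destruct (Nat.leb_spec i m); [lia|reflexivity]. }
  eapply Lr_ext; [|apply (Lr_sumP m b i)].
  intros x _. rewrite (span_fun c s m a b Hb x). reflexivity.
Qed.

Lemma Ltop i a : Lr (fun x => ev i a x * polyP c i s x) (a i * h i s).
Proof.
  destruct (span c s hmonic i a) as [b Hb].
  replace (a i * h i s) with (if Nat.leb i i then b i * h i s else 0).
  2:{ rewrite Nat.leb_refl. rewrite Hb, sum_cc_low; auto. }
  eapply Lr_ext; [|apply (Lr_sumP i b i)].
  intros x _. rewrite (span_fun c s i a b Hb x). reflexivity.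
Qed.

Lemma Ltop1 i a : Lr (fun x => ev (S i) a x * polyP c i s x)
   ((a i - a (S i) * c (S i) i s) * h i s).
Proof.
  destruct (span c s hmonic (S i) a) as [b Hb].
  replace ((a i - a (S i) * c (S i) i s) * h i s) with (if Nat.leb i (S i) then b i * h i s else 0).
  2:{ replace (Nat.leb i (S i)) with true by (symmetry; apply Nat.leb_le; lia).
      rewrite (Hb i), (Hb (S i)) by lia. rewrite sum_cc_low.
      rewrite tech5, sum_cc_low. rewrite cc_low by lia. ring. }
  eapply Lr_ext; [|apply (Lr_sumP (S i) b i)].
  intros x _. rewrite (span_fun c s (S i) a b Hb x). reflexivity.
Qed.

Lemma Luniq m a : (forall j, (j <= m)%nat -> Lr (fun x => ev m a x * polyP c j s x) 0) ->
  (forall j, 0 < h j s) ->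
  forall k, (k <= m)%nat -> a k = 0.
Proof.
  intros H hp. destruct (span c s hmonic m a) as [b Hb].
  assert (Hz : forall j, (j <= m)%nat -> b j = 0).
  { intros j Hj. assert (X := Lr_sumP m b j).
    assert (Y := H j Hj).
    eapply Lr_ext in Y; [|intros x _; rewrite (span_fun c s m a b Hb x); reflexivity].
    assert (E := int01_unique _ _ _ X Y).
    replace (Nat.leb j m) with true in E by (symmetry; apply Nat.leb_le; lia).
    specialize (hp j). apply Rmult_integral in E. destruct E; [auto|lra]. }
  intros k Hk. rewrite Hb by auto. apply sum_eq_R0. intros j Hj. rewrite Hz by auto. ring.
Qed.

End LS.

Lemma dpl_local f g x l : derivable_pt_lim f x l ->
  (exists d, 0 < d /\ forall y, Rabs (y - x) < d -> f y = g y) -> derivable_pt_lim g x l.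
Proof.
  intros H [d [Hd Hfg]] eps Heps.
  destruct (H eps Heps) as [del Hdel].
  assert (Hm : 0 < Rmin del d) by (apply Rmin_glb_lt; [apply cond_pos| lra]).
  exists (mkposreal _ Hm). intros hh Hh0 Hh. simpl in Hh.
  rewrite <- !Hfg. apply Hdel; auto. eapply Rlt_le_trans; [exact Hh| apply Rmin_l].
  - replace (x - x) with 0 by ring. rewrite Rabs_R0. lra.
  - replace (x + hh - x) with hh by ring. eapply Rlt_le_trans; [exact Hh| apply Rmin_r].
Qed.

Lemma cont_local f g x : continuity_pt f x ->
  (exists d, 0 < d /\ forall y, Rabs (y - x) < d -> f y = g y) -> continuity_pt g x.
Proof.
  intros H [d [Hd Hfg]] eps Heps.
  destruct (H eps Heps) as [del [Hdel Hd2]].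
  exists (Rmin del d). split; [apply Rmin_glb_lt; lra|].
  intros y [Hy1 Hy2]. unfold R_dist in *. simpl in *. unfold R_dist in *.
  rewrite <- !Hfg.
  - apply Hd2. split; auto. eapply Rlt_le_trans; [exact Hy2| apply Rmin_l].
  - replace (x - x) with 0 by ring. rewrite Rabs_R0. lra.
  - eapply Rlt_le_trans; [exact Hy2| apply Rmin_r].
Qed.

Lemma dmult f g x a b : derivable_pt_lim f x a -> derivable_pt_lim g x b ->
  derivable_pt_lim (fun y => f y * g y) x (a * g x + f x * b).
Proof. intros; exact (derivable_pt_lim_mult f g x a b H H0). Qed.
Lemma dplus f g x a b : derivable_pt_lim f x a -> derivable_pt_lim g x b ->
  derivable_pt_lim (fun y => f y + g y) x (a + b).
Proof. intros; exact (derivable_pt_lim_plus f g x a b H H0). Qed.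
Lemma dscal f x a l : derivable_pt_lim f x a -> derivable_pt_lim (fun y => l * f y) x (l * a).
Proof. intros; exact (derivable_pt_lim_scal f l x a H). Qed.
Lemma dcomp1m f x a : derivable_pt_lim f (1 - x) a -> derivable_pt_lim (fun y => f (1 - y)) x (- a).
Proof.
  intros H. replace (-a) with (a * (-1)) by ring.
  apply (derivable_pt_lim_comp (fun y => 1 - y) f x (-1) a); [|exact H].
  replace (-1) with (0 - 1) by ring.
  apply (derivable_pt_lim_minus (fct_cte 1) id). apply derivable_pt_lim_const. apply derivable_pt_lim_id.
Qed.
Lemma dext f g x a b : derivable_pt_lim f x a -> a = b -> (forall y, f y = g y) -> derivable_pt_lim g x b.
Proof. intros H -> E. replace g with f; auto. apply functional_extensionality; auto. Qed.

Lemma cmult f g x : continuity_pt f x -> continuity_pt g x -> continuity_pt (fun y => f y * g y) x.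
Proof. intros; exact (continuity_pt_mult f g x H H0). Qed.
Lemma cplus f g x : continuity_pt f x -> continuity_pt g x -> continuity_pt (fun y => f y + g y) x.
Proof. intros; exact (continuity_pt_plus f g x H H0). Qed.
Lemma cconst l x : continuity_pt (fun _ => l) x.
Proof. apply continuity_pt_const. intros u v; reflexivity. Qed.
Lemma cid x : continuity_pt (fun y => y) x.
Proof. apply derivable_continuous_pt. exists 1. apply derivable_pt_lim_id. Qed.
Lemma ccomp1m f x : continuity_pt f (1 - x) -> continuity_pt (fun y => f (1 - y)) x.
Proof.
  intros H. apply (continuity_pt_comp (fun y => 1 - y) f x); [|exact H].
  apply derivable_continuous_pt. exists (0 - 1).
  apply (derivable_pt_lim_minus (fct_cte 1) id). apply derivable_pt_lim_const. apply derivable_pt_lim_id.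
Qed.
Lemma cext f g x : continuity_pt f x -> (forall y, f y = g y) -> continuity_pt g x.
Proof. intros H E. replace g with f; auto. apply functional_extensionality; auto. Qed.

Lemma powr_pos x a : 0 < x -> powr x a = Rpower x a.
Proof. intros H. unfold powr. destruct (Rle_dec x 0); [lra|reflexivity]. Qed.
Lemma powr_nonpos x a : x <= 0 -> powr x a = 0.
Proof. intros H. unfold powr. destruct (Rle_dec x 0); [reflexivity|lra]. Qed.
Lemma powr_ge0 x a : 0 <= powr x a.
Proof. unfold powr. destruct (Rle_dec x 0); [lra|]. unfold Rpower. left; apply exp_pos. Qed.
Lemma powr_gt0 x a : 0 < x -> 0 < powr x a.
Proof. intros H. rewrite powr_pos by auto. unfold Rpower. apply exp_pos. Qed.
Lemma powr_le1 x a : 0 <= a -> x <= 1 -> powr x a <= 1.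
Proof.
  intros Ha Hx. unfold powr. destruct (Rle_dec x 0); [lra|].
  rewrite <- (Rpower_1 1) by lra.
  destruct (Req_dec a 0). subst. rewrite Rpower_O by lra. rewrite Rpower_1; lra.
  rewrite Rpower_1 by lra. unfold Rpower. rewrite <- exp_0. 
  assert (ln x <= 0). { rewrite <- ln_1. destruct (Req_dec x 1). subst; lra. left; apply ln_increasing; lra. }
  destruct (Req_dec (a * ln x) 0). rewrite H1; lra.
  left. apply exp_increasing. nra.
Qed.

Lemma powr_small a eps : 0 < a -> 0 < eps -> exists d, 0 < d /\ forall y, Rabs y < d -> powr y a < eps.
Proof.
  intros Ha He. exists (Rpower eps (/ a)). split; [unfold Rpower; apply exp_pos|].
  intros y Hy. destruct (Rle_dec y 0).
  - rewrite powr_nonpos by auto. lra.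
  - rewrite powr_pos by lra. rewrite Rabs_pos_eq in Hy by lra.
    replace eps with (Rpower (Rpower eps (/ a)) a).
    + apply Rlt_Rpower_l; lra.
    + rewrite Rpower_mult. replace (/ a * a) with 1 by (field; lra). apply Rpower_1; lra.
Qed.

Lemma powr_cont a x : 0 < a -> continuity_pt (fun y => powr y a) x.
Proof.
  intros Ha. destruct (Rtotal_order x 0) as [Hx|[Hx|Hx]].
  - apply cont_local with (fun _ => 0). apply cconst.
    exists (- x). split; [lra|]. intros y Hy. rewrite powr_nonpos; auto.
    apply Rabs_def2 in Hy. lra.
  - subst. intros eps Heps. destruct (powr_small a eps Ha Heps) as [d [Hd H]].
    exists d. split; [lra|]. intros y [_ Hy]. unfold R_dist in *. simpl in *. unfold R_dist in *.
    rewrite (powr_nonpos 0) by lra. rewrite Rminus_0_r in *. rewrite Rabs_pos_eq by apply powr_ge0.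
    apply H. exact Hy.
  - apply cont_local with (fun y => Rpower y a).
    + apply derivable_continuous_pt. exists (a * Rpower x (a - 1)). apply derivable_pt_lim_power; auto.
    + exists x. split; [lra|]. intros y Hy. apply Rabs_def2 in Hy. rewrite powr_pos by lra. auto.
Qed.

Lemma powr_deriv_pos a x : 0 < x -> derivable_pt_lim (fun y => powr y a) x (a * powr x (a - 1)).
Proof.
  intros Hx. rewrite powr_pos by auto. apply dpl_local with (fun y => Rpower y a).
  - apply derivable_pt_lim_power; auto.
  - exists x. split; [lra|]. intros y Hy. apply Rabs_def2 in Hy. rewrite powr_pos by lra. auto.
Qed.

Lemma powr_deriv_0 a : 1 < a -> derivable_pt_lim (fun y => powr y a) 0 0.
Proof.
  intros Ha eps Heps. destruct (powr_small (a - 1) eps ltac:(lra) Heps) as [d [Hd H]].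
  exists (mkposreal d Hd). intros hh Hh0 Hh. simpl in Hh.
  rewrite Rplus_0_l, (powr_nonpos 0) by lra. rewrite Rminus_0_r, Rminus_0_r.
  destruct (Rle_dec hh 0).
  - rewrite powr_nonpos by auto. unfold Rdiv. rewrite Rmult_0_l, Rabs_R0. lra.
  - rewrite powr_pos by lra. replace (Rpower hh a / hh) with (Rpower hh (a - 1)).
    + rewrite Rabs_pos_eq by (unfold Rpower; left; apply exp_pos).
      rewrite <- (powr_pos hh) by lra. apply H; auto.
    + unfold Rminus. rewrite Rpower_plus, Rpower_Ropp, Rpower_1 by lra. reflexivity.
Qed.

Lemma powr_deriv_gt1 a x : 1 < a -> 0 <= x -> derivable_pt_lim (fun y => powr y a) x (a * powr x (a - 1)).
Proof.
  intros Ha Hx. destruct (Req_dec x 0).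
  - subst. rewrite powr_nonpos by lra. rewrite Rmult_0_r. apply powr_deriv_0; auto.
  - apply powr_deriv_pos; lra.
Qed.

Lemma FTC_gen f G a b (pr : Riemann_integrable f a b) : a <= b ->
  (forall x, a <= x <= b -> continuity_pt f x) ->
  (forall x, a <= x <= b -> derivable_pt_lim G x (f x)) ->
  RiemannInt pr = G b - G a.
Proof.
  intros Hab Hc Hd.
  rewrite (RiemannInt_P20 Hab (FTC_P1 Hab Hc) pr).
  assert (A1 := RiemannInt_P29 Hab Hc).
  assert (A2 : antiderivative f G a b).
  { split; auto. intros x Hx. exists (exist _ (f x) (Hd x Hx)).
    symmetry. apply derive_pt_eq_0. apply Hd; auto. }
  destruct (antiderivative_Ucte _ _ _ _ _ A1 A2) as [k Hk].
  rewrite (Hk b), (Hk a) by lra. ring.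
Qed.

(* Core integration by parts with a jump at s *)
Lemma ibp_core A B s G g F : 0 < s < 1 ->
  (forall x, 0 <= x < 1 -> derivable_pt_lim G x (g x)) ->
  (forall x, 0 <= x < 1 -> continuity_pt g x) ->
  (forall x, 0 < x < 1 -> x <> s -> F x = g x * (A + B * heav (x - s))) ->
  (forall b, 0 < b < 1 -> inhabited (Riemann_integrable F 0 b)) ->
  G 0 = 0 ->
  (forall eps, 0 < eps -> exists d, 0 < d /\ forall b, 1 - d < b < 1 -> Rabs (G b) < eps) ->
  int01 F (- B * G s).
Proof.
  intros Hs Hd Hc HF Hi HG0 HG1. split; auto.
  assert (Key : forall b (pr : Riemann_integrable F 0 b), s < b < 1 ->
     RiemannInt pr = (A + B) * G b - B * G s).
  { intros b pr Hb.
    assert (Hsb : 0 <= s <= b) by lra.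
    assert (p1 := RiemannInt_P22 pr Hsb).
    assert (p2 := RiemannInt_P23 pr Hsb).
    rewrite <- (RiemannInt_P26 p1 p2 pr).
    assert (q1 : Riemann_integrable (fun x => A * g x) 0 s).
    { apply continuity_implies_RiemannInt; [lra|]. intros x Hx.
      apply cmult; [apply cconst| apply Hc; lra]. }
    assert (q2 : Riemann_integrable (fun x => (A + B) * g x) s b).
    { apply continuity_implies_RiemannInt; [lra|]. intros x Hx.
      apply cmult; [apply cconst| apply Hc; lra]. }
    rewrite (RiemannInt_P18 p1 q1).
    2: lra.
    2:{ intros x Hx. rewrite HF by lra. unfold heav. destruct (Rlt_dec (x - s) 0); [ring|lra]. }
    rewrite (RiemannInt_P18 p2 q2).
    2: lra.
    2:{ intros x Hx. rewrite HF by lra. unfold heav. destruct (Rlt_dec (x - s) 0); [lra|ring]. }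
    rewrite (FTC_gen _ (fun x => A * G x) _ _ q1); [| lra | |].
    rewrite (FTC_gen _ (fun x => (A + B) * G x) _ _ q2); [| lra | |].
    + rewrite HG0. ring.
    + intros x Hx. apply cmult; [apply cconst| apply Hc; lra].
    + intros x Hx. apply dscal. apply Hd; lra.
    + intros x Hx. apply cmult; [apply cconst| apply Hc; lra].
    + intros x Hx. apply dscal. apply Hd; lra. }
  intros eps Heps.
  destruct (HG1 (eps / (Rabs (A + B) + 1))) as [d [Hd0 Hd1]].
  { apply Rdiv_lt_0_compat; [lra|]. generalize (Rabs_pos (A + B)); lra. }
  exists (Rmin d (1 - s)). split; [apply Rmin_glb_lt; lra|].
  intros b pr Hb. assert (Rmin d (1 - s) <= d) by apply Rmin_l.
  assert (Rmin d (1 - s) <= 1 - s) by apply Rmin_r.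
  rewrite Key by lra. replace ((A + B) * G b - B * G s - - B * G s) with ((A + B) * G b) by ring.
  rewrite Rabs_mult. assert (X := Hd1 b ltac:(lra)).
  assert (Hpos : 0 < Rabs (A + B) + 1) by (generalize (Rabs_pos (A + B)); lra).
  apply Rmult_lt_compat_l with (r := Rabs (A + B) + 1) in X; auto.
  replace ((Rabs (A + B) + 1) * (eps / (Rabs (A + B) + 1))) with eps in X by (field; lra).
  generalize (Rabs_pos (A + B)) (Rabs_pos (G b)). nra.
Qed.

Lemma powr_S x a : 0 < x -> powr x (a + 1) = x * powr x a.
Proof.
  intros H. rewrite !powr_pos by auto. rewrite Rpower_plus, Rpower_1 by auto. ring.
Qed.

Lemma powr_m1 x a : 0 < x -> powr x (a - 1) = powr x a / x.
Proof.
  intros H. rewrite !powr_pos by auto. unfold Rminus. rewrite Rpower_plus, Rpower_Ropp, Rpower_1 by auto.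
  reflexivity.
Qed.

Lemma powr_cont_pos a x : 0 < x -> continuity_pt (fun y => powr y a) x.
Proof.
  intros H. apply derivable_continuous_pt. exists (a * powr x (a - 1)). apply powr_deriv_pos; auto.
Qed.

Lemma cont_lim_at f x0 : continuity_pt f x0 -> f x0 = 0 ->
  forall eps, 0 < eps -> exists d, 0 < d /\ forall b, Rabs (b - x0) < d -> Rabs (f b) < eps.
Proof.
  intros Hc Hf eps Heps. destruct (Hc eps Heps) as [d [Hd H]].
  exists d. split; auto. intros b Hb.
  destruct (Req_dec b x0). subst. rewrite Hf, Rabs_R0. lra.
  assert (X := H b (conj (conj I (not_eq_sym H0)) Hb)).
  unfold R_dist in X. simpl in X. unfold R_dist in X. rewrite Hf, Rminus_0_r in X. exact X.
Qed.

Lemma copp f x : continuity_pt f x -> continuity_pt (fun y => - f y) x.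
Proof. intros; exact (continuity_pt_opp f x H). Qed.

Ltac ct := repeat match goal with
 | |- continuity_pt (fun y => @?f y + @?g y) _ => apply (cplus f g)
 | |- continuity_pt (fun y => @?f y * @?g y) _ => apply (cmult f g)
 | |- continuity_pt (fun y => - @?f y) _ => apply (copp f)
 | |- continuity_pt (fun y => y) _ => apply cid
 | |- continuity_pt (fun y => ?c) _ => apply cconst
 end.

Section IBP.
Variables al be A B s : R.
Hypothesis hal : 0 < al.
Hypothesis hbe : 0 < be.
Hypothesis hs : 0 < s < 1.

Lemma d_powrA x : 0 <= x -> derivable_pt_lim (fun y => powr y (al + 1)) x ((al + 1) * powr x al).
Proof.
  intros H. assert (X := powr_deriv_gt1 (al + 1) x ltac:(lra) H).
  replace (al + 1 - 1) with al in X by ring. exact X.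
Qed.
Lemma d_powrB1 x : x < 1 -> derivable_pt_lim (fun y => powr (1 - y) (be + 1)) x (- ((be + 1) * powr (1 - x) be)).
Proof.
  intros H. apply (dcomp1m (fun y => powr y (be + 1))).
  assert (X := powr_deriv_pos (be + 1) (1 - x) ltac:(lra)).
  replace (be + 1 - 1) with be in X by ring. exact X.
Qed.
Lemma d_powrB x : x < 1 -> derivable_pt_lim (fun y => powr (1 - y) be) x (- (be * powr (1 - x) (be - 1))).
Proof.
  intros H. apply (dcomp1m (fun y => powr y be)). apply powr_deriv_pos; lra.
Qed.

Lemma ibp1 (u u' : R -> R) :
  (forall x, derivable_pt_lim u x (u' x)) -> (forall x, continuity_pt u' x) ->
  (forall b, 0 < b < 1 -> inhabited (Riemann_integrable
     (fun x => (x * (1 - x) * u' x + ((al + 1) - (al + be + 2) * x) * u x) * weight al be A B s x) 0 b)) ->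
  int01 (fun x => (x * (1 - x) * u' x + ((al + 1) - (al + be + 2) * x) * u x) * weight al be A B s x)
    (- B * (powr s (al + 1) * powr (1 - s) (be + 1) * u s)).
Proof.
  intros Hu Hu' Hi.
  assert (Hcu : forall x, continuity_pt u x) by (intros x; apply derivable_continuous_pt; exact (exist _ (u' x) (Hu x))).
  apply (ibp_core A B s
    (fun x => powr x (al + 1) * powr (1 - x) (be + 1) * u x)
    (fun x => (al + 1) * powr x al * powr (1 - x) (be + 1) * u x
                   + powr x (al + 1) * (- ((be + 1) * powr (1 - x) be)) * u x
                   + powr x (al + 1) * powr (1 - x) (be + 1) * u' x)); auto.
  - intros x Hx. apply dext with
      (f := fun y => (fun y => powr y (al + 1) * powr (1 - y) (be + 1)) y * u y)
      (a := ((al + 1) * powr x al * powr (1 - x) (be + 1) + powr x (al + 1) * (- ((be + 1) * powr (1 - x) be))) * u x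
            + (powr x (al + 1) * powr (1 - x) (be + 1)) * u' x).
    + apply (dmult (fun y => powr y (al + 1) * powr (1 - y) (be + 1)) u); [|auto].
      apply (dmult (fun y => powr y (al + 1)) (fun y => powr (1 - y) (be + 1))); [apply d_powrA| apply d_powrB1]; lra.
    + ring.
    + intros; reflexivity.
  - intros x Hx. ct; auto; try (apply powr_cont; lra);
      apply (ccomp1m (fun y => powr y _)); apply powr_cont; lra.
  - intros x Hx _. unfold weight. rewrite !powr_S by lra.
    replace (1 - x) with (1 - x) by ring. ring.
  - rewrite (powr_nonpos 0) by lra. ring.
  - intros eps Heps.
    destruct (cont_lim_at (fun x => powr x (al + 1) * powr (1 - x) (be + 1) * u x) 1) with (eps := eps)
      as [d [Hd H]]; auto.
    + ct; auto; try (apply powr_cont; lra).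
      apply (ccomp1m (fun y => powr y _)); apply powr_cont; lra.
    + rewrite Rminus_diag, (powr_nonpos 0) by lra. ring.
    + exists d. split; auto. intros b Hb. apply H. rewrite Rabs_left by lra. lra.
Qed.

Lemma ibp2 (u u' : R -> R) :
  (forall x, derivable_pt_lim u x (u' x)) -> (forall x, continuity_pt u' x) ->
  (forall b, 0 < b < 1 -> inhabited (Riemann_integrable
     (fun x => ((al + 1 + be) * u x + x * u' x) * weight al be A B s x
               - be * (u x / (1 - x) * weight al be A B s x)) 0 b)) ->
  int01 (fun x => ((al + 1 + be) * u x + x * u' x) * weight al be A B s x
               - be * (u x / (1 - x) * weight al be A B s x))
    (- B * (powr s (al + 1) * powr (1 - s) be * u s)).
Proof.
  intros Hu Hu' Hi.
  assert (Hcu : forall x, continuity_pt u x) by (intros x; apply derivable_continuous_pt; exact (exist _ (u' x) (Hu x))).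
  apply (ibp_core A B s
    (fun x => powr x (al + 1) * powr (1 - x) be * u x)
    (fun x => (al + 1) * powr x al * powr (1 - x) be * u x
                   + powr x (al + 1) * (- (be * powr (1 - x) (be - 1))) * u x
                   + powr x (al + 1) * powr (1 - x) be * u' x)); auto.
  - intros x Hx. apply dext with
      (f := fun y => (fun y => powr y (al + 1) * powr (1 - y) be) y * u y)
      (a := ((al + 1) * powr x al * powr (1 - x) be + powr x (al + 1) * (- (be * powr (1 - x) (be - 1)))) * u x
            + (powr x (al + 1) * powr (1 - x) be) * u' x).
    + apply (dmult (fun y => powr y (al + 1) * powr (1 - y) be) u); [|auto].
      apply (dmult (fun y => powr y (al + 1)) (fun y => powr (1 - y) be)); [apply d_powrA| apply d_powrB]; lra.
    + ring.
    + intros; reflexivity.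
  - intros x Hx. ct; auto; try (apply powr_cont; lra);
      apply (ccomp1m (fun y => powr y _)); apply powr_cont_pos; lra.
  - intros x Hx _. unfold weight. rewrite !powr_S by lra. rewrite powr_m1 by lra.
    field. lra.
  - rewrite (powr_nonpos 0) by lra. ring.
  - intros eps Heps.
    destruct (cont_lim_at (fun x => powr x (al + 1) * powr (1 - x) be * u x) 1) with (eps := eps)
      as [d [Hd H]]; auto.
    + ct; auto; try (apply powr_cont; lra).
      apply (ccomp1m (fun y => powr y _)); apply powr_cont; lra.
    + rewrite Rminus_diag, (powr_nonpos 0) by lra. ring.
    + exists d. split; auto. intros b Hb. apply H. rewrite Rabs_left by lra. lra.
Qed.

End IBP.

Section Main.
Variables al be A B : R.
Hypothesis hal : 0 < al.
Hypothesis hbe : 0 < be.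
Variable c : nat -> nat -> R -> R.
Variable h : nat -> R -> R.
Hypothesis hmonic : forall n s, c n n s = 1.
Variable t : R.
Hypothesis ht : 0 < t < 1.
Hypothesis horth : forall i j : nat, i <> j ->
      int01 (fun x => polyP c i t x * polyP c j t x * weight al be A B t x) 0.
Hypothesis hh : forall i : nat,
      int01 (fun x => polyP c i t x ^ 2 * weight al be A B t x) (h i t).
Hypothesis hpos : forall i, 0 < h i t.

Definition pp1 (j : nat) : R := match j with O => 0 | S j' => c (S j') j' t end.
Definition pp2 (j : nat) : R := match j with O => 0 | S O => 0 | S (S j') => c (S (S j')) j' t end.
Definition alj (j : nat) : R := pp1 j - pp1 (S j).
Definition btj (j : nat) : R := match j with O => 0 | S j' => h (S j') t / h j' t end.
Definition KK : R := B * (powr t al * powr (1 - t) be).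
Definition RRj (j : nat) : R := KK * polyP c j t t ^ 2 / h j t.
Definition rrj (j : nat) : R := match j with O => 0 | S j' => KK * polyP c (S j') t t * polyP c j' t t / h j' t end.

Let a := cc c t.
Let L := Lr al be A B t.
Let P j := polyP c j t.

Lemma a_top j : a j j = 1.
Proof. apply cc_top; auto. Qed.
Lemma a_hi j k : (j < k)%nat -> a j k = 0.
Proof. apply cc_high. Qed.
Lemma a_p1 j : a (S j) j = pp1 (S j).
Proof. unfold a. rewrite cc_low by lia. reflexivity. Qed.
Lemma a_p2 j : a (S (S j)) j = pp2 (S (S j)).
Proof. unfold a. rewrite cc_low by lia. reflexivity. Qed.
Lemma sh_a_top j : sh (a j) (S j) = 1.
Proof. simpl. apply a_top. Qed.

Lemma P_ev j x : P j x = ev j (a j) x.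
Proof. apply polyP_ev. Qed.
Lemma P_ev' j m x : (j <= m)%nat -> ev m (a j) x = P j x.
Proof. intros; apply ev_cc_ext; auto. Qed.

Lemma LTop i b : L (fun x => ev i b x * P i x) (b i * h i t).
Proof. apply (Ltop al be A B c h hmonic t horth hh). Qed.
Lemma LTop1 i b : L (fun x => ev (S i) b x * P i x) ((b i - b (S i) * c (S i) i t) * h i t).
Proof. apply (Ltop1 al be A B c h hmonic t horth hh). Qed.
Lemma LOrth m b i : (m < i)%nat -> L (fun x => ev m b x * P i x) 0.
Proof. apply (Lorth al be A B c h hmonic t horth hh). Qed.
Lemma LPP j i : L (fun x => P j x * P i x) (if Nat.eqb j i then h i t else 0).
Proof. apply (Lr_PP al be A B c h t horth hh). Qed.
Lemma LGen m b i : exists v, L (fun x => ev m b x * P i x) v.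
Proof. apply (Lgen al be A B c h hmonic t horth hh). Qed.

Lemma Lr_ev f g v w : L f v -> v = w -> (forall x, 0 <= x < 1 -> f x = g x) -> L g w.
Proof. intros H -> E. exact (Lr_ext al be A B t f g w E H). Qed.

Lemma xP_ev j x : x * P j x = ev (S j) (sh (a j)) x.
Proof. rewrite ev_mulX, P_ev. reflexivity. Qed.

Lemma rec_coef j : forall k, (k <= S (S j))%nat ->
  a (S (S j)) k = sh (a (S j)) k - alj (S j) * a (S j) k - btj (S j) * a j k.
Proof.
  set (e := fun k => 1 * sh (a (S j)) k + (- alj (S j)) * a (S j) k + (- btj (S j)) * a j k
                     + (-1) * a (S (S j)) k).
  assert (He : forall x, ev (S j) e x = x * P (S j) x - alj (S j) * P (S j) x - btj (S j) * P j x - P (S (S j)) x).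
  { intros x. rewrite <- ev_hi0.
    - unfold e. rewrite ev_comb4. rewrite ev_mulX. rewrite !P_ev' by lia. ring.
    - unfold e. simpl sh. rewrite a_top, a_top, !a_hi by lia. ring. }
  assert (Hz : forall k, (k <= S j)%nat -> e k = 0).
  { apply (Luniq al be A B c h hmonic t horth hh); [|exact hpos].
    intros i Hi.
    refine (Lr_ext al be A B t (fun x => (x * P (S j) x - alj (S j) * P (S j) x - btj (S j) * P j x - P (S (S j)) x) * P i x) _ 0 _ _).
    { intros x _. rewrite He. reflexivity. }
    assert (V2 := LPP (S j) i). assert (V3 := LPP j i). assert (V4 := LPP (S (S j)) i).
    replace (Nat.eqb (S (S j)) i) with false in V4 by (symmetry; apply Nat.eqb_neq; lia).
    destruct (Nat.eq_dec i (S j)) as [->|Hne1].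
    - assert (V1 := LTop1 (S j) (sh (a (S j)))).
      eapply Lr_ext in V1. 2:{ intros x _. rewrite <- xP_ev. reflexivity. }
      rewrite Nat.eqb_refl in V2. replace (Nat.eqb j (S j)) with false in V3 by (symmetry; apply Nat.eqb_neq; lia).
      assert (X := Lr_sub _ _ _ _ _ _ _ _ _ (Lr_sub _ _ _ _ _ _ _ _ _ (Lr_sub _ _ _ _ _ _ _ _ _ V1 (Lr_scal _ _ _ _ _ _ _ (alj (S j)) V2)) (Lr_scal _ _ _ _ _ _ _ (btj (S j)) V3)) V4).
      apply (Lr_ev _ _ _ _ X).
      + simpl sh. rewrite a_p1, a_top. unfold alj. simpl pp1. ring.
      + intros x _. ring.
    - destruct (Nat.eq_dec i j) as [->|Hne2].
      + assert (V1 := LTop (S j) (sh (a j))).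
        eapply Lr_ext in V1. 2:{ intros x _. rewrite <- xP_ev. reflexivity. }
        rewrite Nat.eqb_refl in V3. replace (Nat.eqb (S j) j) with false in V2 by (symmetry; apply Nat.eqb_neq; lia).
        assert (X := Lr_sub _ _ _ _ _ _ _ _ _ (Lr_sub _ _ _ _ _ _ _ _ _ (Lr_sub _ _ _ _ _ _ _ _ _ V1 (Lr_scal _ _ _ _ _ _ _ (alj (S j)) V2)) (Lr_scal _ _ _ _ _ _ _ (btj (S j)) V3)) V4).
        apply (Lr_ev _ _ _ _ X).
        * rewrite sh_a_top. unfold btj. field. specialize (hpos j). lra.
        * intros x _. ring.
      + assert (V1 := LOrth (S i) (sh (a i)) (S j) ltac:(lia)).
        eapply Lr_ext in V1. 2:{ intros x _. rewrite <- xP_ev. reflexivity. }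
        replace (Nat.eqb (S j) i) with false in V2 by (symmetry; apply Nat.eqb_neq; lia).
        replace (Nat.eqb j i) with false in V3 by (symmetry; apply Nat.eqb_neq; lia).
        assert (X := Lr_sub _ _ _ _ _ _ _ _ _ (Lr_sub _ _ _ _ _ _ _ _ _ (Lr_sub _ _ _ _ _ _ _ _ _ V1 (Lr_scal _ _ _ _ _ _ _ (alj (S j)) V2)) (Lr_scal _ _ _ _ _ _ _ (btj (S j)) V3)) V4).
        apply (Lr_ev _ _ _ _ X); [ring| intros x _; ring]. }
  intros k Hk. destruct (Nat.eq_dec k (S (S j))) as [->|Hne].
  - simpl sh. rewrite !a_top, !a_hi by lia. ring.
  - assert (X := Hz k ltac:(lia)). unfold e in X. lra.
Qed.


Lemma rec_fun j x : P (S (S j)) x = (x - alj (S j)) * P (S j) x - btj (S j) * P j x.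
Proof.
  rewrite P_ev. rewrite (ev_ext _ _ (fun k => 1 * sh (a (S j)) k + (- alj (S j)) * a (S j) k
                     + (- btj (S j)) * a j k + 0 * a j k)).
  - rewrite ev_comb4, ev_mulX, !P_ev' by lia. ring.
  - intros k Hk. rewrite rec_coef by auto. ring.
Qed.

Lemma P0 x : P 0 x = 1.
Proof. unfold P, polyP. simpl. rewrite hmonic. ring. Qed.
Lemma P1 x : P 1 x = x - alj 0.
Proof. unfold P, polyP, alj, pp1. simpl. rewrite hmonic. ring. Qed.

Lemma d_fact j : rrj (S j) + rrj j = (t - alj j) * RRj j.
Proof.
  destruct j.
  - unfold rrj, RRj. fold (P 1) (P 0). rewrite P1, P0. field. apply Rgt_not_eq, hpos.
  - unfold rrj, RRj. fold (P (S (S j))) (P (S j)) (P j). rewrite rec_fun. unfold btj.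
    field. repeat split; apply Rgt_not_eq, hpos.
Qed.

Lemma p2rec j : pp2 (S j) = pp2 j - alj j * pp1 j - btj j.
Proof.
  destruct j.
  - simpl. ring.
  - assert (X := rec_coef j j ltac:(lia)). rewrite a_p2, a_p1, a_top in X.
    rewrite X. destruct j.
    + simpl. ring.
    + simpl sh. rewrite a_p2. ring.
Qed.

Lemma sh_a_j j : sh (a j) j = pp1 j.
Proof. destruct j; [reflexivity|]. simpl sh. apply a_p1. Qed.
Lemma sh_xd_j j : sh (xd (a j)) j = (INR j - 1) * pp1 j.
Proof.
  destruct j; [simpl; ring|]. simpl sh. unfold xd. rewrite a_p1. rewrite S_INR. ring.
Qed.
Lemma xd_top j : xd (a j) j = INR j.
Proof. unfold xd. rewrite a_top. ring. Qed.
Lemma xd_hi j k : (j < k)%nat -> xd (a j) k = 0.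
Proof. intros H. unfold xd. rewrite a_hi by auto. ring. Qed.

Lemma P_deriv j x : derivable_pt_lim (P j) x (evd j (a j) x).
Proof.
  replace (P j) with (ev j (a j)). apply ev_deriv.
  apply functional_extensionality. intros; rewrite P_ev; reflexivity.
Qed.

Lemma powr_tt : powr t (al + 1) * powr (1 - t) (be + 1) = t * (1 - t) * (powr t al * powr (1 - t) be).
Proof. rewrite !powr_S by lra. ring. Qed.
Lemma powr_t1 : powr t (al + 1) * powr (1 - t) be = t * (powr t al * powr (1 - t) be).
Proof. rewrite !powr_S by lra. ring. Qed.

Lemma xPd_ev j x : x * evd j (a j) x = ev (S j) (xd (a j)) x.
Proof. rewrite evd_xd. symmetry. apply ev_hi0. apply xd_hi. lia. Qed.

Lemma int01_of_L g v : L g v -> forall b, 0 < b < 1 -> inhabited (Riemann_integrable (fun x => g x * weight al be A B t x) 0 b).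
Proof. intros [H _]. exact H. Qed.

Lemma b_fact j : (2 * INR j + 2 + al + be) * alj j = 2 * pp1 j + 2 * INR j + 1 + al + t * (1 - t) * RRj j.
Proof.
  set (f := fun k => 2 * xd (a j) k + (-2) * sh (xd (a j)) k + (al + 1) * a j k + (- (al + be + 2)) * sh (a j) k).
  set (u := fun x => P j x * P j x).
  set (u' := fun x => evd j (a j) x * P j x + P j x * evd j (a j) x).
  assert (HL := LTop1 j f).
  assert (HL2 : L (fun x => x * (1 - x) * u' x + ((al + 1) - (al + be + 2) * x) * u x)
              ((f j - f (S j) * c (S j) j t) * h j t)).
  { apply (Lr_ev _ _ _ _ HL); auto. intros x _. unfold f. rewrite ev_comb4.
    rewrite <- xPd_ev, !ev_mulX, (P_ev' j (S j)) by lia. rewrite <- evd_xd, <- P_ev.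
    unfold u, u'. ring. }
  assert (HI := ibp1 al be A B t hal hbe ht u u').
  assert (X : int01 (fun x => (x * (1 - x) * u' x + ((al + 1) - (al + be + 2) * x) * u x) * weight al be A B t x)
     (- B * (powr t (al + 1) * powr (1 - t) (be + 1) * u t))).
  { apply HI.
    - intros x. apply (dmult (P j) (P j)); apply P_deriv.
    - intros x. unfold u'. apply cplus; apply cmult; try apply evd_cont; apply (ev_cont j (a j) x) || idtac.
      all: apply cext with (ev j (a j)); [apply ev_cont| intros; rewrite P_ev; reflexivity].
    - apply int01_of_L with (v := (f j - f (S j) * c (S j) j t) * h j t). exact HL2. }
  assert (E := int01_unique _ _ _ HL2 X).
  rewrite powr_tt in E. unfold u in E. fold (P j) in E.
  unfold f in E. rewrite xd_top, xd_hi, sh_xd_j, sh_a_j, a_top, a_hi in E by lia.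
  simpl sh in E. rewrite a_top, xd_top in E.
  replace (c (S j) j t) with (pp1 (S j)) in E by reflexivity.
  unfold RRj, alj, KK. fold (P j). try rewrite S_INR in E.
  apply (Rmult_eq_reg_r (h j t)); [|specialize (hpos j); lra].
  field_simplify; [|specialize (hpos j); lra].
  field_simplify in E. lra.
Qed.


Lemma sh_a_Sj j : sh (a (S j)) j = pp2 (S j).
Proof. destruct j; [reflexivity|]. simpl sh. apply a_p2. Qed.
Lemma sh_xd_Sj j : sh (xd (a (S j))) j = (INR j - 1) * pp2 (S j).
Proof.
  destruct j; [simpl; ring|]. simpl sh. unfold xd. rewrite a_p2. rewrite S_INR. ring.
Qed.

Lemma P_cont j x : continuity_pt (P j) x.
Proof. apply cext with (ev j (a j)); [apply ev_cont| intros; rewrite P_ev; reflexivity]. Qed.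

Lemma G_fact j : 2 * pp2 (S j) = pp1 (S j) + pp1 (S j) ^ 2 + (2 * INR (S j) + 1 + al + be) * btj (S j)
   - t * (1 - t) * rrj (S j).
Proof.
  set (q1 := fun k => 1 * xd (a (S j)) k + (-1) * sh (xd (a (S j))) k + (INR j + 1) * sh (a (S j)) k + 0 * a j k).
  set (q2 := fun k => 1 * xd (a j) k + (-1) * sh (xd (a j)) k + (al + 1) * a j k + (- (al + be + 2)) * sh (a j) k).
  set (u := fun x => P (S j) x * P j x).
  set (u' := fun x => evd (S j) (a (S j)) x * P j x + P (S j) x * evd j (a j) x).
  assert (V1 := LTop1 j q1). assert (V2 := LTop (S j) q2). assert (V3 := LTop (S j) (sh (a j))).
  assert (HL := Lr_sub _ _ _ _ _ _ _ _ _ (Lr_add _ _ _ _ _ _ _ _ _ V1 V2) (Lr_scal _ _ _ _ _ _ _ (INR j + 1) V3)).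
  assert (HL2 : L (fun x => x * (1 - x) * u' x + ((al + 1) - (al + be + 2) * x) * u x)
              ((q1 j - q1 (S j) * c (S j) j t) * h j t + q2 (S j) * h (S j) t - (INR j + 1) * (sh (a j) (S j) * h (S j) t))).
  { apply (Lr_ev _ _ _ _ HL); auto. intros x _.
    rewrite <- (ev_hi0 (S j) q1).
    2:{ unfold q1. rewrite xd_hi by lia. simpl sh. rewrite a_top, a_hi, xd_top by lia. rewrite S_INR. ring. }
    unfold q1, q2. rewrite !ev_comb4.
    rewrite <- !xPd_ev.
    rewrite (ev_mulX (S j) (xd (a (S j))) x), (ev_mulX (S j) (a (S j)) x), (ev_mulX j (xd (a j)) x), (ev_mulX j (a j) x).
    rewrite (P_ev' j (S (S j))), (P_ev' j (S j)), (P_ev' (S j) (S j)) by lia.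
    rewrite <- (evd_xd (S j)), <- (evd_xd j), <- (P_ev j).
    unfold u, u'. ring. }
  assert (X : int01 (fun x => (x * (1 - x) * u' x + ((al + 1) - (al + be + 2) * x) * u x) * weight al be A B t x)
     (- B * (powr t (al + 1) * powr (1 - t) (be + 1) * u t))).
  { apply (ibp1 al be A B t hal hbe ht u u').
    - intros x. apply (dmult (P (S j)) (P j)); apply P_deriv.
    - intros x. unfold u'. apply cplus; apply cmult; try apply evd_cont; apply P_cont.
    - eapply int01_of_L. exact HL2. }
  assert (E := int01_unique _ _ _ HL2 X).
  rewrite powr_tt in E. unfold u in E.
  unfold q1, q2 in E. rewrite (xd_top (S j)), (sh_xd_j (S j)), (sh_a_j (S j)), (a_hi j (S j)), (sh_xd_Sj j),
     (sh_a_Sj j), (a_top j), (xd_hi j (S j)) in E by lia.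
  simpl sh in E. rewrite (xd_top j), (a_top j) in E. unfold xd in E. rewrite a_p1 in E.
  replace (c (S j) j t) with (pp1 (S j)) in E by reflexivity.
  unfold rrj, btj, KK. fold (P (S j)) (P j).
  assert (hj := hpos j). assert (hSj := hpos (S j)).
  rewrite S_INR in *.
  apply (Rmult_eq_reg_r (h j t)); [|lra].
  field_simplify; [|lra].
  field_simplify in E. nra.
Qed.

Lemma x_fact n I1 : int01 (fun y => polyP c n t y ^ 2 / (1 - y) * weight al be A B t y) I1 ->
  be * I1 = (2 * INR n + 1 + al + be) * h n t + t * KK * P n t ^ 2.
Proof.
  intros HI1.
  set (q := fun k => (al + 1 + be) * a n k + 2 * xd (a n) k + 0 * a n k + 0 * a n k).
  set (u := fun x => P n x * P n x).
  set (u' := fun x => evd n (a n) x * P n x + P n x * evd n (a n) x).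
  assert (V := LTop n q).
  assert (W := int01_lin _ _ _ _ (- be) V HI1).
  assert (W2 : int01 (fun x => ((al + 1 + be) * u x + x * u' x) * weight al be A B t x
               - be * (u x / (1 - x) * weight al be A B t x)) (q n * h n t + - be * I1)).
  { eapply int01_ext; [|exact W]. intros x _. unfold q. rewrite ev_comb4.
    rewrite <- (evd_xd n), <- (P_ev n). unfold u, u'. fold (P n). unfold Rdiv. ring. }
  assert (X := ibp2 al be A B t hal hbe ht u u').
  assert (X2 : int01 (fun x => ((al + 1 + be) * u x + x * u' x) * weight al be A B t x
               - be * (u x / (1 - x) * weight al be A B t x))
    (- B * (powr t (al + 1) * powr (1 - t) be * u t))).
  { apply X.
    - intros x. apply (dmult (P n) (P n)); apply P_deriv.
    - intros x. unfold u'. apply cplus; apply cmult; try apply evd_cont; apply P_cont.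
    - destruct W2 as [Hi _]. exact Hi. }
  assert (E := int01_unique _ _ _ W2 X2).
  rewrite powr_t1 in E. unfold q, u in E. rewrite a_top, xd_top in E.
  unfold KK. fold (P n). nra.
Qed.

Lemma y_fact m I2 : int01 (fun y => polyP c (S m) t y * polyP c m t y / (1 - y) * weight al be A B t y) I2 ->
  be * I2 = - pp1 (S m) * h m t + t * KK * P (S m) t * P m t.
Proof.
  intros HI2.
  set (q := fun k => (al + 1 + be) * a m k + 1 * xd (a m) k + 0 * a m k + 0 * a m k).
  set (u := fun x => P (S m) x * P m x).
  set (u' := fun x => evd (S m) (a (S m)) x * P m x + P (S m) x * evd m (a m) x).
  assert (V1 := LTop1 m (xd (a (S m)))).
  assert (V2 := LOrth m q (S m) ltac:(lia)).
  assert (V := Lr_add _ _ _ _ _ _ _ _ _ V1 V2).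
  assert (W := int01_lin _ _ _ _ (- be) V HI2).
  assert (W2 : int01 (fun x => ((al + 1 + be) * u x + x * u' x) * weight al be A B t x
               - be * (u x / (1 - x) * weight al be A B t x))
      ((xd (a (S m)) m - xd (a (S m)) (S m) * c (S m) m t) * h m t + 0 + - be * I2)).
  { eapply int01_ext; [|exact W]. intros x _. unfold q. rewrite ev_comb4.
    rewrite <- (evd_xd (S m)), <- (evd_xd m), <- (P_ev m). unfold u, u'. fold (P (S m)) (P m). unfold Rdiv. ring. }
  assert (X := ibp2 al be A B t hal hbe ht u u').
  assert (X2 : int01 (fun x => ((al + 1 + be) * u x + x * u' x) * weight al be A B t x
               - be * (u x / (1 - x) * weight al be A B t x))
    (- B * (powr t (al + 1) * powr (1 - t) be * u t))).
  { apply X.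
    - intros x. apply (dmult (P (S m)) (P m)); apply P_deriv.
    - intros x. unfold u'. apply cplus; apply cmult; try apply evd_cont; apply P_cont.
    - destruct W2 as [Hi _]. exact Hi. }
  assert (E := int01_unique _ _ _ W2 X2).
  rewrite powr_t1 in E. unfold u in E. unfold xd in E. rewrite a_top, a_p1 in E.
  replace (c (S m) m t) with (pp1 (S m)) in E by reflexivity.
  rewrite S_INR in E. unfold KK. fold (P (S m)) (P m). nra.
Qed.

Lemma an_bn_fact m an bn :
  (forall x, x * polyP c (S m) t x = polyP c (S (S m)) t x + an * polyP c (S m) t x + bn * polyP c m t x) ->
  an = alj (S m) /\ bn = btj (S m).
Proof.
  intros Hr.
  assert (V1 := LPP (S (S m)) (S m)). assert (V2 := LPP (S m) (S m)). assert (V3 := LPP m (S m)).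
  assert (W1 := LPP (S (S m)) m). assert (W2 := LPP (S m) m). assert (W3 := LPP m m).
  rewrite Nat.eqb_refl in V2, W3.
  replace (Nat.eqb (S (S m)) (S m)) with false in V1 by (symmetry; apply Nat.eqb_neq; lia).
  replace (Nat.eqb m (S m)) with false in V3 by (symmetry; apply Nat.eqb_neq; lia).
  replace (Nat.eqb (S (S m)) m) with false in W1 by (symmetry; apply Nat.eqb_neq; lia).
  replace (Nat.eqb (S m) m) with false in W2 by (symmetry; apply Nat.eqb_neq; lia).
  assert (V := Lr_add _ _ _ _ _ _ _ _ _ (Lr_add _ _ _ _ _ _ _ _ _ V1 (Lr_scal _ _ _ _ _ _ _ an V2)) (Lr_scal _ _ _ _ _ _ _ bn V3)).
  assert (W := Lr_add _ _ _ _ _ _ _ _ _ (Lr_add _ _ _ _ _ _ _ _ _ W1 (Lr_scal _ _ _ _ _ _ _ an W2)) (Lr_scal _ _ _ _ _ _ _ bn W3)).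
  assert (U1 := LTop1 (S m) (sh (a (S m)))).
  assert (U2 := LTop (S m) (sh (a m))).
  assert (U1' : L (fun x => (x * P (S m) x) * P (S m) x) ((sh (a (S m)) (S m) - sh (a (S m)) (S (S m)) * c (S (S m)) (S m) t) * h (S m) t)).
  { apply (Lr_ev _ _ _ _ U1); auto. intros x _. rewrite xP_ev. reflexivity. }
  assert (U2' : L (fun x => (x * P (S m) x) * P m x) (sh (a m) (S m) * h (S m) t)).
  { apply (Lr_ev _ _ _ _ U2); auto. intros x _. rewrite <- (xP_ev m x). unfold P. ring. }
  assert (V' : L (fun x => (x * P (S m) x) * P (S m) x) (0 + an * h (S m) t + bn * 0)).
  { apply (Lr_ev _ _ _ _ V); auto. intros x _. unfold P. rewrite Hr. ring. }
  assert (W' : L (fun x => (x * P (S m) x) * P m x) (0 + an * 0 + bn * h m t)).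
  { apply (Lr_ev _ _ _ _ W); auto. intros x _. unfold P. rewrite Hr. ring. }
  assert (E1 := int01_unique _ _ _ U1' V'). assert (E2 := int01_unique _ _ _ U2' W').
  simpl sh in E1, E2. rewrite (a_top (S m)), (a_p1 m) in E1. rewrite (a_top m) in E2.
  assert (hm := hpos m). assert (hSm := hpos (S m)).
  split.
  - unfold alj. replace (c (S (S m)) (S m) t) with (pp1 (S (S m))) in E1 by reflexivity.
    apply (Rmult_eq_reg_r (h (S m) t)); [|lra]. lra.
  - unfold btj. apply (Rmult_eq_reg_r (h m t)); [|lra]. field_simplify; lra.
Qed.

Lemma G_all j : 2 * pp2 j = pp1 j + pp1 j ^ 2 + (2 * INR j + 1 + al + be) * btj j - t * (1 - t) * rrj j.
Proof. destruct j. - simpl. ring. - apply G_fact. Qed.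

Lemma F3_fact j : (2 * INR j - 1 + al + be) * (2 * INR j + 1 + al + be) * btj j =
  pp1 j ^ 2 + (- be + (2 * INR j + al + be) * t) * pp1 j + (2 * INR j + al + be) * t * (1 - t) * rrj j
  + INR j * (INR j + al) * t.
Proof.
  induction j.
  - simpl. ring.
  - assert (gS := G_all (S j)). assert (g0 := G_all j). assert (p := p2rec j).
    assert (hd := d_fact j). assert (hb := b_fact j).
    unfold alj in *. rewrite S_INR in *.
    apply Rminus_diag_uniq.
    match goal with |- ?L - ?R = 0 =>
      replace (L - R) with
        ((2 * INR j + al + be + 1) * (2 * (pp2 (S j) - (pp2 j - (pp1 j - pp1 (S j)) * pp1 j - btj j))
                     + (2 * pp2 j - (pp1 j + pp1 j ^ 2 + (2 * INR j + 1 + al + be) * btj j - t * (1 - t) * rrj j))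
                     - (2 * pp2 (S j) - (pp1 (S j) + pp1 (S j) ^ 2 + (2 * (INR j + 1) + 1 + al + be) * btj (S j) - t * (1 - t) * rrj (S j))))
         + ((2 * INR j - 1 + al + be) * (2 * INR j + 1 + al + be) * btj j -
            (pp1 j ^ 2 + (- be + (2 * INR j + al + be) * t) * pp1 j + (2 * INR j + al + be) * t * (1 - t) * rrj j
             + INR j * (INR j + al) * t))
         - t * (1 - t) * (rrj (S j) + rrj j - (t - (pp1 j - pp1 (S j))) * RRj j)
         + (t - (pp1 j - pp1 (S j))) * ((2 * INR j + 2 + al + be) * (pp1 j - pp1 (S j)) -
              (2 * pp1 j + 2 * INR j + 1 + al + t * (1 - t) * RRj j))) by ring
    end.
    rewrite (Rminus_diag_eq _ _ p), (Rminus_diag_eq _ _ IHj), (Rminus_diag_eq _ _ hd),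
      (Rminus_diag_eq _ _ hb), (Rminus_diag_eq _ _ gS), (Rminus_diag_eq _ _ g0). ring.
Qed.

End Main.

Definition Ival a b f v := exists pr : Riemann_integrable f a b, RiemannInt pr = v.

Lemma Ival_cont a b f : (forall x, continuity_pt f x) -> exists v, Ival a b f v.
Proof.
  intros Hc. destruct (Rle_dec a b).
  - assert (pr := @continuity_implies_RiemannInt f a b r (fun x _ => Hc x)).
    exists (RiemannInt pr). exists pr. reflexivity.
  - assert (pr := @continuity_implies_RiemannInt f b a ltac:(lra) (fun x _ => Hc x)).
    assert (pr' := RiemannInt_P1 pr). exists (RiemannInt pr'). exists pr'. reflexivity.
Qed.

Lemma Ival_swap a b f v : Ival a b f v -> Ival b a f (- v).
Proof.
  intros [pr Hv]. exists (RiemannInt_P1 pr). rewrite (RiemannInt_P8 (RiemannInt_P1 pr) pr). lra.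
Qed.

Lemma Ival_bound a b f v M : Ival a b f v -> (forall x, Rmin a b <= x <= Rmax a b -> Rabs (f x) <= M) ->
  Rabs v <= M * Rabs (b - a).
Proof.
  intros [pr Hv] HM. subst v.
  assert (gen : forall a b (pr : Riemann_integrable f a b), a <= b ->
     (forall x, a <= x <= b -> Rabs (f x) <= M) -> Rabs (RiemannInt pr) <= M * (b - a)).
  { clear. intros a b pr Hab HM.
    assert (pa := RiemannInt_P16 pr).
    eapply Rle_trans; [apply (RiemannInt_P17 pr pa Hab)|].
    assert (pc := RiemannInt_P14 a b M).
    rewrite <- (RiemannInt_P15 pc). apply RiemannInt_P19; auto.
    intros x Hx. unfold fct_cte. apply HM. lra. }
  destruct (Rle_dec a b).
  - rewrite (Rabs_pos_eq (b - a)) by lra. apply gen; auto. intros x Hx. apply HM.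
    rewrite Rmin_left, Rmax_right by lra. auto.
  - rewrite (RiemannInt_P8 pr (RiemannInt_P1 pr)), Rabs_Ropp. rewrite (Rabs_left (b - a)) by lra.
    replace (- (b - a)) with (a - b) by ring. apply gen; [lra|]. intros x Hx. apply HM.
    rewrite Rmin_right, Rmax_left by lra. auto.
Qed.

Lemma Ival_lin a b f g u v l : Ival a b f u -> Ival a b g v -> Ival a b (fun x => f x + l * g x) (u + l * v).
Proof.
  intros [p1 H1] [p2 H2]. exists (RiemannInt_P10 l p1 p2). rewrite (RiemannInt_P13 p1 p2). subst; reflexivity.
Qed.

Lemma Ival_ext a b f g v : (forall x, f x = g x) -> Ival a b f v -> Ival a b g v.
Proof. intros E H. replace g with f; auto. apply functional_extensionality; auto. Qed.

Lemma Ival_const a b k : Ival a b (fun _ => k) (k * (b - a)).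
Proof.
  exists (RiemannInt_P14 a b k). apply RiemannInt_P15.
Qed.

Lemma Ival_unique a b f u v : Ival a b f u -> Ival a b f v -> u = v.
Proof. intros [p1 H1] [p2 H2]. subst. apply RiemannInt_P5. Qed.

Definition W0 al be x := powr x al * powr (1 - x) be.

Section DW.
Variables al be A B : R.
Hypothesis hal : 0 < al.
Hypothesis hbe : 0 < be.

Lemma W0_cont x : continuity_pt (W0 al be) x.
Proof.
  unfold W0. apply (cmult (fun y => powr y al) (fun y => powr (1 - y) be)).
  apply powr_cont; auto. apply (ccomp1m (fun y => powr y be)). apply powr_cont; auto.
Qed.

Lemma diff_w_lt s t f vt vs : 0 < t -> t < s -> s < 1 -> (forall x, continuity_pt f x) ->
  int01 (fun x => f x * weight al be A B t x) vt -> int01 (fun x => f x * weight al be A B s x) vs ->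
  Ival t s (fun x => B * f x * W0 al be x) (vt - vs).
Proof.
  intros H0 Hts H1 Hc [Ht Ct] [Hs Cs].
  assert (Hcg : forall x, continuity_pt (fun x => B * f x * W0 al be x) x).
  { intros x. apply (cmult (fun x => B * f x) (W0 al be)); [|apply W0_cont].
    apply (cmult (fun _ => B) f); [apply cconst| auto]. }
  destruct (Ival_cont t s _ Hcg) as [V HV].
  assert (Key : forall b' (p1 : Riemann_integrable (fun x => f x * weight al be A B t x) 0 b')
                   (p2 : Riemann_integrable (fun x => f x * weight al be A B s x) 0 b'),
             s < b' < 1 -> RiemannInt p1 - RiemannInt p2 = V).
  { intros b' p1 p2 Hb.
    assert (p3 := RiemannInt_P10 (-1) p1 p2).
    replace (RiemannInt p1 - RiemannInt p2) with (RiemannInt p1 + (-1) * RiemannInt p2) by ring.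
    rewrite <- (RiemannInt_P13 p1 p2 p3).
    set (F := fun x => f x * weight al be A B t x + -1 * (f x * weight al be A B s x)) in *.
    assert (q1 := RiemannInt_P22 p3 (conj (Rlt_le _ _ H0) (Rlt_le _ _ (Rlt_trans _ _ _ Hts (proj1 Hb))))).
    assert (q2 := RiemannInt_P23 p3 (conj (Rlt_le _ _ H0) (Rlt_le _ _ (Rlt_trans _ _ _ Hts (proj1 Hb))))).
    assert (q21 := RiemannInt_P22 q2 (conj (Rlt_le _ _ Hts) (Rlt_le _ _ (proj1 Hb)))).
    assert (q22 := RiemannInt_P23 q2 (conj (Rlt_le _ _ Hts) (Rlt_le _ _ (proj1 Hb)))).
    rewrite <- (RiemannInt_P26 q1 q2 p3), <- (RiemannInt_P26 q21 q22 q2).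
    destruct HV as [pv HV].
    rewrite (RiemannInt_P18 q1 (RiemannInt_P14 0 t 0)); [| lra |].
    2:{ intros x Hx. unfold F, fct_cte, weight, heav.
        destruct (Rlt_dec (x - t) 0); [|lra]. destruct (Rlt_dec (x - s) 0); [|lra]. ring. }
    rewrite (RiemannInt_P18 q22 (RiemannInt_P14 s b' 0)); [| lra |].
    2:{ intros x Hx. unfold F, fct_cte, weight, heav.
        destruct (Rlt_dec (x - t) 0); [lra|]. destruct (Rlt_dec (x - s) 0); [lra|]. ring. }
    rewrite (RiemannInt_P18 q21 pv); [| lra |].
    2:{ intros x Hx. unfold F, fct_cte, weight, heav, W0.
        destruct (Rlt_dec (x - t) 0); [lra|]. destruct (Rlt_dec (x - s) 0); [|lra]. ring. }
    rewrite !RiemannInt_P15. rewrite HV. ring. }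
  assert (E : vt - vs = V).
  { apply cond_eq. intros eps Heps.
    destruct (Ct (eps / 2) ltac:(lra)) as [d1 [Hd1 C1]].
    destruct (Cs (eps / 2) ltac:(lra)) as [d2 [Hd2 C2]].
    set (m := Rmin (Rmin d1 d2) (1 - s)).
    assert (Hm1 : m <= d1) by (unfold m; eapply Rle_trans; [apply Rmin_l| apply Rmin_l]).
    assert (Hm2 : m <= d2) by (unfold m; eapply Rle_trans; [apply Rmin_l| apply Rmin_r]).
    assert (Hm3 : m <= 1 - s) by (unfold m; apply Rmin_r).
    assert (Hm0 : 0 < m) by (unfold m; apply Rmin_glb_lt; [apply Rmin_glb_lt|]; lra).
    set (b' := 1 - m / 2).
    destruct (Ht b' ltac:(unfold b'; lra)) as [p1].
    destruct (Hs b' ltac:(unfold b'; lra)) as [p2].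
    rewrite <- (Key b' p1 p2) by (unfold b'; lra).
    assert (X1 := C1 b' p1 ltac:(unfold b'; lra)).
    assert (X2 := C2 b' p2 ltac:(unfold b'; lra)).
    replace (vt - vs - (RiemannInt p1 - RiemannInt p2)) with (- (RiemannInt p1 - vt) + (RiemannInt p2 - vs)) by ring.
    eapply Rle_lt_trans; [apply Rabs_triang|]. rewrite Rabs_Ropp. lra. }
  rewrite E. exact HV.
Qed.

Lemma diff_w s t f vt vs : 0 < t < 1 -> 0 < s < 1 -> (forall x, continuity_pt f x) ->
  int01 (fun x => f x * weight al be A B t x) vt -> int01 (fun x => f x * weight al be A B s x) vs ->
  Ival t s (fun x => B * f x * W0 al be x) (vt - vs).
Proof.
  intros Ht Hs Hc It Is. destruct (Rtotal_order t s) as [Hlt|[Heq|Hgt]].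
  - apply diff_w_lt; auto; lra.
  - subst s. rewrite (int01_unique _ _ _ It Is), Rminus_diag.
    replace 0 with (0 * (t - t)) by ring.
    destruct (Ival_cont t t (fun x => B * f x * W0 al be x)) as [v Hv].
    { intros x. apply (cmult (fun x => B * f x) (W0 al be)); [|apply W0_cont].
      apply (cmult (fun _ => B) f); [apply cconst| auto]. }
    destruct Hv as [pr Hv]. exists pr. rewrite RiemannInt_P9. ring.
  - assert (X := diff_w_lt t s f vs vt ltac:(lra) Hgt ltac:(lra) Hc Is It).
    apply Ival_swap in X. replace (vt - vs) with (- (vs - vt)) by ring. exact X.
Qed.

End DW.

Lemma ev_bound m a x : Rabs x <= 1 -> Rabs (ev m a x) <= sum_f_R0 (fun k => Rabs (a k)) m.
Proof.
  intros Hx. unfold ev. eapply Rle_trans; [apply Rsum_abs|]. apply sum_Rle. intros k _.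
  rewrite Rabs_mult, <- RPow_abs. rewrite <- (Rmult_1_r (Rabs (a k))) at 2.
  apply Rmult_le_compat_l; [apply Rabs_pos|]. rewrite <- (pow1 k). apply pow_incr. split; [apply Rabs_pos| auto].
Qed.

Lemma coef_le_sum (a : nat -> R) m k : (k <= m)%nat -> Rabs (a k) <= sum_f_R0 (fun k => Rabs (a k)) m.
Proof.
  induction m; intros Hk.
  - assert (k = 0%nat) by lia. subst. simpl. lra.
  - rewrite tech5. destruct (Nat.eq_dec k (S m)).
    + subst. assert (0 <= sum_f_R0 (fun k => Rabs (a k)) m).
      { apply cond_pos_sum. intros; apply Rabs_pos. }
      lra.
    + assert (X := IHm ltac:(lia)). generalize (Rabs_pos (a (S m))). lra.
Qed.

Lemma sum_abs_nonneg (a : nat -> R) m : 0 <= sum_f_R0 (fun k => Rabs (a k)) m.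
Proof. apply cond_pos_sum. intros; apply Rabs_pos. Qed.

Lemma W0_bound al be x : 0 <= al -> 0 <= be -> 0 <= x <= 1 -> 0 <= W0 al be x <= 1.
Proof.
  intros Ha Hb Hx. unfold W0. split.
  - apply Rmult_le_pos; apply powr_ge0.
  - rewrite <- (Rmult_1_r 1). apply Rmult_le_compat; try apply powr_ge0; apply powr_le1; lra.
Qed.

Section Deriv.
Variables al be A B : R.
Hypothesis hal : 0 < al.
Hypothesis hbe : 0 < be.
Variable c : nat -> nat -> R -> R.
Variable h : nat -> R -> R.
Hypothesis hmonic : forall n s, c n n s = 1.
Hypothesis horth : forall s, 0 < s < 1 -> forall i j : nat, i <> j ->
      int01 (fun x => polyP c i s x * polyP c j s x * weight al be A B s x) 0.
Hypothesis hh : forall s, 0 < s < 1 -> forall i : nat,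
      int01 (fun x => polyP c i s x ^ 2 * weight al be A B s x) (h i s).
Hypothesis hpos : forall s, 0 < s < 1 -> forall i : nat, 0 < h i s.
Variable t : R.
Hypothesis ht : 0 < t < 1.
Variable m : nat.

Lemma polyP_cont j s x : continuity_pt (polyP c j s) x.
Proof. apply cext with (ev j (cc c s j)); [apply ev_cont| intros; rewrite polyP_ev; reflexivity]. Qed.

Lemma stepAB s : 0 < s < 1 -> exists b : nat -> R,
  (forall k, (k <= m)%nat -> cc c s (S m) k - cc c t (S m) k = sum_f_R0 (fun j => b j * cc c t j k) m) /\
  (forall i, (i <= m)%nat -> Ival t s (fun x => B * (polyP c (S m) s x * polyP c i t x) * W0 al be x) (b i * h i t)).
Proof.
  intros hs.
  set (d := fun k => cc c s (S m) k + (-1) * cc c t (S m) k).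
  destruct (span c t hmonic m d) as [b Hb]. exists b. split.
  { intros k Hk. rewrite <- Hb by auto. unfold d. ring. }
  intros i Hi.
  assert (HD : forall x, ev m d x = polyP c (S m) s x - polyP c (S m) t x).
  { intros x. rewrite <- ev_hi0.
    - unfold d. rewrite ev_lin, !polyP_ev. ring.
    - unfold d. rewrite !cc_top by auto. ring. }
  assert (V1 := Lr_sumP al be A B c h t (horth t ht) (hh t ht) m b i).
  replace (Nat.leb i m) with true in V1 by (symmetry; apply Nat.leb_le; auto).
  assert (V2 := Lr_PP al be A B c h t (horth t ht) (hh t ht) (S m) i).
  replace (Nat.eqb (S m) i) with false in V2 by (symmetry; apply Nat.eqb_neq; lia).
  assert (V := Lr_add _ _ _ _ _ _ _ _ _ V1 V2).
  assert (Vt : int01 (fun x => (polyP c (S m) s x * polyP c i t x) * weight al be A B t x) (b i * h i t + 0)).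
  { eapply int01_ext; [|exact V]. intros x _. cbv beta. rewrite <- (span_fun c t m d b Hb x), HD. ring. }
  assert (Vs := Lorth al be A B c h hmonic s (horth s hs) (hh s hs) i (cc c t i) (S m) ltac:(lia)).
  assert (Vs' : int01 (fun x => (polyP c (S m) s x * polyP c i t x) * weight al be A B s x) 0).
  { eapply int01_ext; [|exact Vs]. intros x _. cbv beta. rewrite (polyP_ev c t i x). ring. }
  assert (X := diff_w al be A B hal hbe s t (fun x => polyP c (S m) s x * polyP c i t x) _ _ ht hs
     ltac:(intros x; apply (cmult (polyP c (S m) s) (polyP c i t)); apply polyP_cont) Vt Vs').
  replace (b i * h i t) with (b i * h i t + 0 - 0) by ring. exact X.
Qed.


Definition sig s := sum_f_R0 (fun k => Rabs (cc c s (S m) k)) (S m).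
Definition tau j := sum_f_R0 (fun k => Rabs (cc c t j k)) j.
Definition Cc := Rabs B * sum_f_R0 (fun j => tau j * tau j / h j t) m.

Lemma Pbound j s x : 0 <= x <= 1 -> Rabs (polyP c j s x) <= sum_f_R0 (fun k => Rabs (cc c s j k)) j.
Proof. intros Hx. rewrite polyP_ev. apply ev_bound. rewrite Rabs_pos_eq; lra. Qed.

Lemma cc_le_tau j k : Rabs (cc c t j k) <= tau j.
Proof.
  destruct (Compare_dec.le_lt_dec k j).
  - apply coef_le_sum; auto.
  - rewrite cc_high by auto. rewrite Rabs_R0. apply sum_abs_nonneg.
Qed.

Lemma Cc_nonneg : 0 <= Cc.
Proof.
  unfold Cc. apply Rmult_le_pos; [apply Rabs_pos|]. apply cond_pos_sum. intros j.
  unfold Rdiv. apply Rmult_le_pos; [apply Rmult_le_pos; apply sum_abs_nonneg|].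
  left; apply Rinv_0_lt_compat; apply hpos; auto.
Qed.

Lemma between_01 s x : 0 < s < 1 -> Rmin t s <= x <= Rmax t s -> 0 <= x <= 1.
Proof.
  intros Hs Hx. destruct (Rle_dec t s).
  - rewrite Rmin_left, Rmax_right in Hx by lra. lra.
  - rewrite Rmin_right, Rmax_left in Hx by lra. lra.
Qed.

Lemma between_dist s x : Rmin t s <= x <= Rmax t s -> Rabs (x - t) <= Rabs (s - t).
Proof.
  intros Hx. destruct (Rle_dec t s).
  - rewrite Rmin_left, Rmax_right in Hx by lra. rewrite !Rabs_pos_eq by lra. lra.
  - rewrite Rmin_right, Rmax_left in Hx by lra. rewrite !Rabs_left1 by lra. lra.
Qed.

Lemma bound_b s b : 0 < s < 1 ->
  (forall i, (i <= m)%nat -> Ival t s (fun x => B * (polyP c (S m) s x * polyP c i t x) * W0 al be x) (b i * h i t)) ->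
  forall i, (i <= m)%nat -> Rabs (b i) <= Rabs B * sig s * tau i * Rabs (s - t) / h i t.
Proof.
  intros hs Hi i Hii. assert (hp := hpos t ht i).
  assert (X := Ival_bound _ _ _ _ (Rabs B * sig s * tau i) (Hi i Hii)).
  apply (Rmult_le_reg_r (h i t)); auto. unfold Rdiv. rewrite Rmult_assoc, Rinv_l, Rmult_1_r by lra.
  replace (Rabs (b i) * h i t) with (Rabs (b i * h i t)) by (rewrite Rabs_mult, (Rabs_pos_eq (h i t)); lra).
  apply X. intros x Hx. assert (H01 := between_01 s x hs Hx).
  rewrite !Rabs_mult. assert (W := W0_bound al be x ltac:(lra) ltac:(lra) H01).
  rewrite (Rabs_pos_eq (W0 al be x)) by lra.
  assert (P1 := Pbound (S m) s x H01). assert (P2 := Pbound i t x H01).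
  fold (sig s) in P1. fold (tau i) in P2.
  assert (0 <= Rabs (polyP c (S m) s x)) by apply Rabs_pos.
  assert (0 <= Rabs (polyP c i t x)) by apply Rabs_pos.
  assert (0 <= Rabs B) by apply Rabs_pos.
  assert (Rabs (polyP c (S m) s x) * Rabs (polyP c i t x) <= sig s * tau i) by
    (apply Rmult_le_compat; auto).
  assert (Rabs B * (Rabs (polyP c (S m) s x) * Rabs (polyP c i t x)) <= Rabs B * (sig s * tau i)) by
    (apply Rmult_le_compat_l; auto).
  assert (0 <= Rabs B * (Rabs (polyP c (S m) s x) * Rabs (polyP c i t x))) by
    (apply Rmult_le_pos; auto; apply Rmult_le_pos; auto).
  nra.
Qed.

Lemma sum_mult_r (f : nat -> R) k N : sum_f_R0 (fun j => f j * k) N = sum_f_R0 f N * k.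
Proof. induction N; simpl; [ring|]. rewrite IHN. ring. Qed.

Lemma bound_d s b : 0 < s < 1 ->
  (forall i, (i <= m)%nat -> Ival t s (fun x => B * (polyP c (S m) s x * polyP c i t x) * W0 al be x) (b i * h i t)) ->
  forall k, Rabs (sum_f_R0 (fun j => b j * cc c t j k) m) <= Cc * sig s * Rabs (s - t).
Proof.
  intros hs Hi k. eapply Rle_trans; [apply Rsum_abs|].
  replace (Cc * sig s * Rabs (s - t)) with
     (sum_f_R0 (fun j => tau j * tau j / h j t * (Rabs B * sig s * Rabs (s - t))) m)
     by (rewrite sum_mult_r; unfold Cc; ring).
  apply sum_Rle. intros j Hj. rewrite Rabs_mult.
  assert (X := bound_b s b hs Hi j Hj). assert (Y := cc_le_tau j k).
  assert (hp := hpos t ht j).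
  assert (0 <= sig s) by apply sum_abs_nonneg. assert (0 <= tau j) by apply sum_abs_nonneg.
  assert (0 <= Rabs B) by apply Rabs_pos. assert (0 <= Rabs (s - t)) by apply Rabs_pos.
  eapply Rle_trans. { apply Rmult_le_compat; [apply Rabs_pos| apply Rabs_pos| exact X| exact Y]. }
  right. field. lra.
Qed.

Lemma sig_bound s b : 0 < s < 1 ->
  (forall k, (k <= m)%nat -> cc c s (S m) k - cc c t (S m) k = sum_f_R0 (fun j => b j * cc c t j k) m) ->
  (forall i, (i <= m)%nat -> Ival t s (fun x => B * (polyP c (S m) s x * polyP c i t x) * W0 al be x) (b i * h i t)) ->
  sig s <= sig t + INR (S m) * (Cc * sig s * Rabs (s - t)).
Proof.
  intros hs Hd Hi.
  assert (E1 : sig s = sum_f_R0 (fun k => Rabs (cc c s (S m) k)) m + 1).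
  { unfold sig. rewrite tech5, cc_top, Rabs_R1 by auto. reflexivity. }
  assert (E2 : sig t = sum_f_R0 (fun k => Rabs (cc c t (S m) k)) m + 1).
  { unfold sig. rewrite tech5, cc_top, Rabs_R1 by auto. reflexivity. }
  assert (sum_f_R0 (fun k => Rabs (cc c s (S m) k)) m <=
          sum_f_R0 (fun k => Rabs (cc c t (S m) k) + Cc * sig s * Rabs (s - t)) m).
  { apply sum_Rle. intros k Hk. replace (cc c s (S m) k) with (cc c t (S m) k + (cc c s (S m) k - cc c t (S m) k)) by ring.
    eapply Rle_trans; [apply Rabs_triang|]. rewrite Hd by auto.
    assert (X := bound_d s b hs Hi k). lra. }
  rewrite sum_plus, sum_cte in H. rewrite S_INR. rewrite S_INR in H. lra.
Qed.

Lemma deriv_p1 : derivable_pt_lim (fun s => c (S m) m s) t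
   (B * (polyP c (S m) t t * polyP c m t t * W0 al be t) / h m t).
Proof.
  intros eps Heps.
  assert (hm := hpos t ht m).
  set (g := fun x => polyP c (S m) t x * polyP c m t x * W0 al be x).
  assert (gc : continuity_pt g t).
  { unfold g. apply (cmult (fun x => polyP c (S m) t x * polyP c m t x) (W0 al be)); [|apply W0_cont; auto].
    apply (cmult (polyP c (S m) t) (polyP c m t)); apply polyP_cont. }
  set (e1 := eps * h m t / (2 * (Rabs B + 1))).
  assert (He1 : 0 < e1) by (unfold e1; apply Rdiv_lt_0_compat; [nra| generalize (Rabs_pos B); lra]).
  destruct (gc e1 He1) as [dg [Hdg Cg]].
  assert (Cg' : forall x, Rabs (x - t) < dg -> Rabs (g x - g t) < e1).
  { intros x Hx. destruct (Req_dec x t). subst. rewrite Rminus_diag, Rabs_R0. lra.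
    apply (Cg x). split; [split; [exact I| auto]| exact Hx]. }
  set (st := sig t). assert (Hst : 0 <= st) by apply sum_abs_nonneg.
  assert (HCc := Cc_nonneg).
  set (K := Rabs B * (INR (S m) * (Cc * (2 * st))) * tau m).
  assert (HK : 0 <= K).
  { unfold K. apply Rmult_le_pos; [|apply sum_abs_nonneg]. apply Rmult_le_pos; [apply Rabs_pos|].
    apply Rmult_le_pos; [apply pos_INR| nra]. }
  set (d0 := / (2 * INR (S m) * (Cc + 1))).
  assert (HSm : 0 < INR (S m)) by (apply lt_0_INR; lia).
  assert (Hd0 : 0 < d0) by (unfold d0; apply Rinv_0_lt_compat; nra).
  set (d2 := eps * h m t / (2 * (K + 1))).
  assert (Hd2 : 0 < d2) by (unfold d2; apply Rdiv_lt_0_compat; nra).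
  set (del := Rmin (Rmin dg d0) (Rmin (Rmin t (1 - t)) d2)).
  assert (Hdel : 0 < del) by (unfold del; repeat apply Rmin_glb_lt; lra).
  exists (mkposreal del Hdel). intros hx Hh0 Hh. simpl in Hh.
  assert (Hdel1 : del <= dg) by (unfold del; eapply Rle_trans; [apply Rmin_l| apply Rmin_l]).
  assert (Hdel2 : del <= d0) by (unfold del; eapply Rle_trans; [apply Rmin_l| apply Rmin_r]).
  assert (Hdel3 : del <= t) by (unfold del; eapply Rle_trans; [apply Rmin_r| eapply Rle_trans; [apply Rmin_l| apply Rmin_l]]).
  assert (Hdel4 : del <= 1 - t) by (unfold del; eapply Rle_trans; [apply Rmin_r| eapply Rle_trans; [apply Rmin_l| apply Rmin_r]]).
  assert (Hdel5 : del <= d2) by (unfold del; eapply Rle_trans; [apply Rmin_r| apply Rmin_r]).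
  set (s := t + hx).
  assert (Hs : 0 < s < 1) by (unfold s; apply Rabs_def2 in Hh; lra).
  assert (Hst' : Rabs (s - t) = Rabs hx) by (unfold s; f_equal; ring).
  destruct (stepAB s Hs) as [b [Hd Hi]].
  assert (Hhx : Rabs hx < del) by exact Hh.
  assert (Hhx0 : 0 < Rabs hx) by (apply Rabs_pos_lt; auto).
  assert (Hsig := sig_bound s b Hs Hd Hi).
  assert (Hss : 0 <= sig s) by apply sum_abs_nonneg.
  assert (Hq : INR (S m) * (Cc * Rabs hx) <= / 2).
  { assert (INR (S m) * (Cc * Rabs hx) <= INR (S m) * ((Cc + 1) * d0)).
    { apply Rmult_le_compat_l; [lra|]. apply Rmult_le_compat; lra. }
    replace (INR (S m) * ((Cc + 1) * d0)) with (/ 2) in H by (unfold d0; field; lra). lra. }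
  assert (Hsig2 : sig s <= 2 * st).
  { rewrite Hst' in Hsig. fold st in Hsig.
    assert (INR (S m) * (Cc * sig s * Rabs hx) = sig s * (INR (S m) * (Cc * Rabs hx))) by ring.
    assert (sig s * (INR (S m) * (Cc * Rabs hx)) <= sig s * / 2) by (apply Rmult_le_compat_l; lra).
    lra. }
  assert (Hdiff : c (S m) m s - c (S m) m t = b m).
  { assert (X := Hd m (le_n m)). rewrite (sum_cc_low c hmonic t b m) in X.
    rewrite !cc_low in X by lia. exact X. }
  set (D := fun x => polyP c (S m) s x - polyP c (S m) t x).
  assert (HDb : forall x, 0 <= x <= 1 -> Rabs (D x) <= INR (S m) * (Cc * sig s * Rabs hx)).
  { intros x Hx. set (d := fun k => cc c s (S m) k + (-1) * cc c t (S m) k).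
    assert (E : D x = ev m d x).
    { unfold D. rewrite <- ev_hi0.
      - unfold d. rewrite ev_lin, !polyP_ev. ring.
      - unfold d. rewrite !cc_top by auto. ring. }
    rewrite E. eapply Rle_trans; [apply ev_bound; rewrite Rabs_pos_eq; lra|].
    rewrite Rmult_comm, <- sum_cte. apply sum_Rle. intros k Hk. unfold d.
    replace (cc c s (S m) k + -1 * cc c t (S m) k) with (cc c s (S m) k - cc c t (S m) k) by ring.
    rewrite Hd by auto. rewrite <- Hst'. apply bound_d; auto. }
  assert (cg : forall x, continuity_pt (fun x => B * g x) x).
  { intros x. apply (cmult (fun _ => B) g); [apply cconst|]. unfold g.
    apply (cmult (fun x => polyP c (S m) t x * polyP c m t x) (W0 al be)); [|apply W0_cont; auto].
    apply (cmult (polyP c (S m) t) (polyP c m t)); apply polyP_cont. }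
  assert (cD : forall x, continuity_pt (fun x => B * (D x * polyP c m t x * W0 al be x)) x).
  { intros x. apply (cmult (fun _ => B) (fun x => D x * polyP c m t x * W0 al be x)); [apply cconst|].
    apply (cmult (fun x => D x * polyP c m t x) (W0 al be)); [|apply W0_cont; auto].
    apply (cmult D (polyP c m t)); [|apply polyP_cont]. unfold D.
    apply (cplus (polyP c (S m) s) (fun x => - polyP c (S m) t x)); [apply polyP_cont|].
    apply (copp (polyP c (S m) t)). apply polyP_cont. }
  destruct (Ival_cont t s _ cg) as [v1 I1].
  destruct (Ival_cont t s _ cD) as [v2 I2].
  assert (Hbm : b m * h m t = v1 + 1 * v2).
  { apply (Ival_unique t s (fun x => B * (polyP c (S m) s x * polyP c m t x) * W0 al be x)); [apply Hi; auto|].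
    apply (Ival_ext _ _ _ _ _ ltac:(intros x; reflexivity)) in I1.
    eapply Ival_ext; [|exact (Ival_lin _ _ _ _ _ _ 1 I1 I2)].
    intros x. unfold g, D. ring. }
  assert (B1 : Rabs (v1 + -1 * (B * g t * (s - t))) <= Rabs B * e1 * Rabs (s - t)).
  { apply (Ival_bound t s (fun x => B * g x + -1 * (B * g t))).
    - apply Ival_lin; auto. apply Ival_const.
    - intros x Hx. replace (B * g x + -1 * (B * g t)) with (B * (g x - g t)) by ring.
      rewrite Rabs_mult. apply Rmult_le_compat_l; [apply Rabs_pos|]. left. apply Cg'.
      assert (X := between_dist s x Hx). lra. }
  assert (B2 : Rabs v2 <= K * Rabs hx * Rabs hx).
  { eapply Rle_trans. apply (Ival_bound t s _ _ (Rabs B * (INR (S m) * (Cc * sig s * Rabs hx)) * tau m) I2).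
    - intros x Hx. assert (H01 := between_01 s x Hs Hx).
      rewrite !Rabs_mult. assert (W := W0_bound al be x ltac:(lra) ltac:(lra) H01).
      rewrite (Rabs_pos_eq (W0 al be x)) by lra.
      assert (P2 := Pbound m t x H01). fold (tau m) in P2.
      assert (X := HDb x H01).
      assert (0 <= Rabs (D x)) by apply Rabs_pos. assert (0 <= Rabs (polyP c m t x)) by apply Rabs_pos.
      assert (0 <= Rabs B) by apply Rabs_pos.
      assert (Rabs (D x) * Rabs (polyP c m t x) <= (INR (S m) * (Cc * sig s * Rabs hx)) * tau m)
        by (apply Rmult_le_compat; auto).
      assert (Rabs (D x) * Rabs (polyP c m t x) * W0 al be x <= Rabs (D x) * Rabs (polyP c m t x)).
      { rewrite <- (Rmult_1_r (Rabs (D x) * Rabs (polyP c m t x))) at 2.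
        apply Rmult_le_compat_l; [apply Rmult_le_pos; auto| lra]. }
      apply Rle_trans with (Rabs B * (Rabs (D x) * Rabs (polyP c m t x))).
      + apply Rmult_le_compat_l; auto.
      + replace (Rabs B * (INR (S m) * (Cc * sig s * Rabs hx)) * tau m) with
          (Rabs B * (INR (S m) * (Cc * sig s * Rabs hx) * tau m)) by ring.
        apply Rmult_le_compat_l; auto.
    - rewrite Hst'. unfold K.
      assert (0 <= tau m) by apply sum_abs_nonneg. assert (0 <= Rabs B) by apply Rabs_pos.
      assert (X : Cc * sig s <= Cc * (2 * st)) by (apply Rmult_le_compat_l; lra).
      assert (0 <= Rabs hx) by apply Rabs_pos.
      assert (Y : Rabs B * (INR (S m) * (Cc * sig s * Rabs hx)) * tau m * Rabs hx =
                  (Rabs B * INR (S m) * tau m * (Rabs hx * Rabs hx)) * (Cc * sig s)) by ring.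
      assert (Z : Rabs B * (INR (S m) * (Cc * (2 * st))) * tau m * Rabs hx * Rabs hx =
                  (Rabs B * INR (S m) * tau m * (Rabs hx * Rabs hx)) * (Cc * (2 * st))) by ring.
      rewrite Y, Z. apply Rmult_le_compat_l; auto.
      apply Rmult_le_pos; [apply Rmult_le_pos; [apply Rmult_le_pos|]|]; nra. }
  change ((fun s => c (S m) m s) (t + hx)) with (c (S m) m s).
  replace ((c (S m) m s - c (S m) m t) / hx - B * (polyP c (S m) t t * polyP c m t t * W0 al be t) / h m t)
    with (((v1 + -1 * (B * g t * (s - t))) + v2) / (hx * h m t)).
  2:{ rewrite Hdiff. unfold s in *. unfold g. apply (Rmult_eq_reg_r (h m t)); [|lra].
      field_simplify; [| lra | split; lra]. rewrite (Rmult_comm (h m t) (b m)), Hbm. field. lra. }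
  unfold Rdiv. rewrite Rabs_mult, Rabs_inv, Rabs_mult, (Rabs_pos_eq (h m t)) by (try lra; apply Rmult_integral_contrapositive; split; lra).
  apply (Rmult_lt_reg_r (Rabs hx * h m t)); [nra|].
  rewrite Rmult_assoc, Rinv_l, Rmult_1_r by nra.
  eapply Rle_lt_trans; [apply Rabs_triang|].
  rewrite Hst' in B1.
  assert (Hb1 : Rabs B * e1 < eps * h m t / 2).
  { unfold e1. assert (0 <= Rabs B) by apply Rabs_pos.
    replace (Rabs B * (eps * h m t / (2 * (Rabs B + 1)))) with ((eps * h m t / 2) * (Rabs B / (Rabs B + 1))) by (field; lra).
    assert (Rabs B / (Rabs B + 1) < 1) by (apply (Rmult_lt_reg_r (Rabs B + 1)); [lra|]; unfold Rdiv; rewrite Rmult_assoc, Rinv_l; lra).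
    assert (0 < eps * h m t / 2) by nra. nra. }
  assert (Hb2 : K * Rabs hx < eps * h m t / 2).
  { assert (K * Rabs hx <= K * d2) by (apply Rmult_le_compat_l; lra).
    assert (K * d2 < eps * h m t / 2).
    { unfold d2. replace (K * (eps * h m t / (2 * (K + 1)))) with ((eps * h m t / 2) * (K / (K + 1))) by (field; lra).
      assert (K / (K + 1) < 1) by (apply (Rmult_lt_reg_r (K + 1)); [lra|]; unfold Rdiv; rewrite Rmult_assoc, Rinv_l; lra).
      assert (0 < eps * h m t / 2) by nra. nra. }
    lra. }
  nra.
Qed.

End Deriv.

Theorem theorem3p3
  (al be A B : R) (hal : 0 < al) (hbe : 0 < be)
  (hA : 0 <= A) (hAB : 0 <= A + B) (hnz : ~ (A = 0 /\ B = 0))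
  (c : nat -> nat -> R -> R) (h : nat -> R -> R)
  (hmonic : forall n s, c n n s = 1)
  (horth : forall s, 0 < s < 1 -> forall i j : nat, i <> j ->
      int01 (fun x => polyP c i s x * polyP c j s x * weight al be A B s x) 0)
  (hh : forall s, 0 < s < 1 -> forall i : nat,
      int01 (fun x => polyP c i s x ^ 2 * weight al be A B s x) (h i s))
  (hpos : forall s, 0 < s < 1 -> forall i : nat, 0 < h i s)
  (t : R) (ht : 0 < t < 1) (n : nat) (hn : (1 <= n)%nat)
  (an bn : R)
  (hrec : forall x, x * polyP c n t x
            = polyP c (S n) t x + an * polyP c n t x + bn * polyP c (n - 1) t x)
  (I1 I2 : R)
  (hI1 : int01 (fun y => polyP c n t y ^ 2 / (1 - y) * weight al be A B t y) I1)
  (hI2 : int01 (fun y => polyP c n t y * polyP c (n - 1) t y / (1 - y)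
                          * weight al be A B t y) I2) :
  let N := INR n in
  let p1 := c n (n - 1)%nat t in
  let rn := B * powr t al * powr (1 - t) be * polyP c n t t * polyP c (n - 1) t t
            / h (n - 1)%nat t in
  let xn := be / h n t * I1 in
  let yn := be / h (n - 1)%nat t * I2 in
  ((2 * N + 2 + al + be) * an
     = 2 * t * rn - 2 * yn - be + (2 * N + 1 + al + be) * t + (1 - t) * xn
   /\ 2 * t * rn - 2 * yn - be + (2 * N + 1 + al + be) * t + (1 - t) * xn
     = 2 * p1 - be + (2 * N + 1 + al + be) * t + (1 - t) * xn)
  /\
  exists dp1 : R,
    derivable_pt_lim (fun s => c n (n - 1)%nat s) t dp1 /\
    (2 * N - 1 + al + be) * (2 * N + 1 + al + be) * bn
      = (yn - t * rn) ^ 2 + (2 * N + al) * t * rn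
        + (be - (2 * N + al + be) * t) * yn + N * (N + al) * t /\
    (yn - t * rn) ^ 2 + (2 * N + al) * t * rn
        + (be - (2 * N + al + be) * t) * yn + N * (N + al) * t
      = p1 ^ 2 + (2 * N + al) * p1 + (2 * N + al + be) * (1 - t) * yn
        + N * (N + al) * t /\
    p1 ^ 2 + (2 * N + al) * p1 + (2 * N + al + be) * (1 - t) * yn
        + N * (N + al) * t
      = p1 ^ 2 + (- be + (2 * N + al + be) * t) * p1
        + (2 * N + al + be) * t * (1 - t) * dp1 + N * (N + al) * t.
Proof.
  destruct n as [|m]; [lia|]. clear hn.
  replace (S m - 1)%nat with m in * by lia.
  cbv zeta.
  assert (Ho := horth t ht). assert (Hh := hh t ht). assert (Hp := hpos t ht).
  assert (hmt := Hp m). assert (hSm := Hp (S m)).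
  destruct (an_bn_fact al be A B c h hmonic t Ho Hh Hp m an bn hrec) as [Ean Ebn].
  assert (Xf : be * I1 = (2 * INR (S m) + 1 + al + be) * h (S m) t + t * KK al be B t * polyP c (S m) t t ^ 2).
  { eapply x_fact; eauto. }
  assert (Yf : be * I2 = - pp1 c t (S m) * h m t + t * KK al be B t * polyP c (S m) t t * polyP c m t t).
  { eapply y_fact; eauto. }
  assert (Bf := b_fact al be A B hal hbe c h hmonic t ht Ho Hh Hp (S m)).
  assert (Ff := F3_fact al be A B hal hbe c h hmonic t ht Ho Hh Hp (S m)).
  assert (Df := deriv_p1 al be A B hal hbe c h hmonic horth hh hpos t ht m).
  assert (X : be / h (S m) t * I1 = 2 * INR (S m) + 1 + al + be + t * RRj al be B c h t (S m)).
  { unfold RRj. replace (be / h (S m) t * I1) with ((be * I1) / h (S m) t) by (field; lra).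
    rewrite Xf. field. lra. }
  assert (Y : be / h m t * I2 = - pp1 c t (S m) + t * rrj al be B c h t (S m)).
  { unfold rrj. replace (be / h m t * I2) with ((be * I2) / h m t) by (field; lra).
    rewrite Yf. field. lra. }
  assert (R : B * powr t al * powr (1 - t) be * polyP c (S m) t t * polyP c m t t / h m t = rrj al be B c h t (S m)).
  { unfold rrj, KK. field. lra. }
  assert (P1 : c (S m) m t = pp1 c t (S m)) by reflexivity.
  rewrite X, Y, R, P1, Ean, Ebn.
  unfold alj in *.
  split; [split|].
  - rewrite S_INR in *. lra.
  - lra.
  - exists (rrj al be B c h t (S m)). split.
    + rewrite <- R. eapply dext; [exact Df| unfold W0; field; lra| intros; reflexivity].
    + rewrite S_INR in *. split; [|split].
      * rewrite Ff. ring.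
      * ring.
      * ring.
Qed.
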